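(* Let $(M,g)$ be a space-time of dimension $n=4$ and $u$ a time-like unit vector field ($u_ku^k=-1$) that is Weyl compatible, i.e. $$(u_iC_{jklm}+u_jC_{kilm}+u_kC_{ijlm})u^m=0,$$ where $C_{abcd}$ is the Weyl tensor. Let $E_{ab}=u^bu^cC_{abcd}$-type electric part be defined by $E_{ad}=u^bu^cC_{abcd}$. Then $$C_{abcd}=2\big(u_au_dE_{bc}-u_au_cE_{bd}+u_bu_cE_{ad}-u_bu_dE_{ac}\big)+g_{ad}E_{bc}-g_{ac}E_{bd}+g_{bc}E_{ad}-g_{bd}E_{ac},$$ and $C^2=8E^2$, where $C^2=C_{abcd}C^{abcd}$ and $E^2=E_{ab}E^{ab}$.
   Context: Indices are raised and lowered with the metric $g$. *)

(* Defs.v *)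
(* Pointwise (algebraic) formalization on the tangent space R^4. *)
From HB Require Import structures.
From mathcomp Require Import all_boot all_order all_algebra.
From mathcomp Require Import reals.
Set Implicit Arguments. Unset Strict Implicit. Unset Printing Implicit Defensive.
Import Order.TTheory GRing.Theory Num.Theory.
Local Open Scope ring_scope.

Notation idx := 'I_4.

Definition minkowski (R : realType) : 'M[R]_4 :=
  diag_mx (\row_(i < 4) (if i == ord0 then -1 else 1)).

Definition lorentzian (R : realType) (g : 'M[R]_4) : Prop :=
  g^T = g /\ exists P : 'M[R]_4, P \in unitmx /\ P^T *m g *m P = minkowski R.

Definition ginv (R : realType) (g : 'M[R]_4) : 'M[R]_4 := invmx g.

Definition tensor4 (R : realType) := idx -> idx -> idx -> idx -> R.

Definition weyl_tensor (R : realType) (g : 'M[R]_4) (C : tensor4 R) : Prop :=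
  (forall a b c d, C a b c d = - C b a c d) /\
  (forall a b c d, C a b c d = - C a b d c) /\
  (forall a b c d, C a b c d = C c d a b) /\
  (forall a b c d, C a b c d + C a c d b + C a d b c = 0) /\
  (forall b d, \sum_(a < 4) \sum_(c < 4) ginv g a c * C a b c d = 0).

Definition lower (R : realType) (g : 'M[R]_4) (u : idx -> R) (a : idx) : R :=
  \sum_(b < 4) g a b * u b.

Definition weyl_compatible (R : realType) (g : 'M[R]_4) (C : tensor4 R)
  (u : idx -> R) : Prop :=
  forall i j k l,
    \sum_(m < 4) (lower g u i * C j k l m + lower g u j * C k i l m
                  + lower g u k * C i j l m) * u m = 0.

Definition electric (R : realType) (C : tensor4 R) (u : idx -> R) (a d : idx) : R :=
  \sum_(b < 4) \sum_(c < 4) u b * u c * C a b c d.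

Definition weyl_sq (R : realType) (g : 'M[R]_4) (C : tensor4 R) : R :=
  \sum_(a < 4) \sum_(b < 4) \sum_(c < 4) \sum_(d < 4)
   C a b c d *
   (\sum_(p < 4) \sum_(q < 4) \sum_(r < 4) \sum_(s < 4)
      ginv g a p * ginv g b q * ginv g c r * ginv g d s * C p q r s).

Definition tensor2_sq (R : realType) (g : 'M[R]_4) (E : idx -> idx -> R) : R :=
  \sum_(a < 4) \sum_(b < 4)
   E a b * (\sum_(p < 4) \sum_(q < 4) ginv g a p * ginv g b q * E p q).

(* Main.v *)
Require Import Defs.
From HB Require Import structures.
From mathcomp Require Import all_boot all_order all_algebra.
From mathcomp Require Import reals.
From mathcomp Require Import lra ring.
From Stdlib Require Import FunctionalExtensionality.
Import Order.TTheory GRing.Theory Num.Theory.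
Local Open Scope ring_scope.


Definition i0 : 'I_4 := @Ordinal 4 0 isT.
Definition i1 : 'I_4 := @Ordinal 4 1 isT.
Definition i2 : 'I_4 := @Ordinal 4 2 isT.
Definition i3 : 'I_4 := @Ordinal 4 3 isT.

Variant ord4_spec (i : 'I_4) : Prop :=
 | O4_0 of i = i0 | O4_1 of i = i1 | O4_2 of i = i2 | O4_3 of i = i3.
Lemma ord4P (i : 'I_4) : ord4_spec i.
Proof.
case: i => [[|[|[|[|n]]]] Hn].
- by apply: O4_0; apply: val_inj.
- by apply: O4_1; apply: val_inj.
- by apply: O4_2; apply: val_inj.
- by apply: O4_3; apply: val_inj.
- by [].
Qed.

Definition d0 {R : realType} (a : 'I_4) : R := if a == i0 then 1 else 0.
Definition eta {R : realType} (a b : 'I_4) : R :=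
  if a == b then (if a == i0 then -1 else 1) else 0.
Definition Wt {R : realType} (e : 'I_4 -> 'I_4 -> R) (a b c d : 'I_4) : R :=
  2 * (d0 a * d0 d * e b c - d0 a * d0 c * e b d + d0 b * d0 c * e a d - d0 b * d0 d * e a c)
  + eta a d * e b c - eta a c * e b d + eta b c * e a d - eta b d * e a c.


Lemma sum4 {R : realType} (F : 'I_4 -> R) :
  \sum_(i < 4) F i = F i0 + F i1 + F i2 + F i3.
Proof.
rewrite !big_ord_recr big_ord0 /= add0r.
congr (_ + _ + _ + _); congr F; exact: val_inj.
Qed.

Lemma sum_diag {R : realType} (c : 'I_4) (F : 'I_4 -> R) :
  (forall r, r != c -> F r = 0) -> \sum_(r < 4) F r = F c.
Proof.
move=> H; rewrite (bigD1 c) //= big1 ?addr0 // => r /H //.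
Qed.

Lemma eta_off {R : realType} {c r : 'I_4} : r != c -> @eta R c r = 0.
Proof. by move=> H; rewrite /eta eq_sym (negbTE H). Qed.

Lemma inner_eta {R : realType} (X : tensor4 R) a b c d :
  \sum_(p < 4) \sum_(q < 4) \sum_(r < 4) \sum_(s < 4)
     eta a p * eta b q * eta c r * eta d s * X p q r s
  = eta a a * eta b b * eta c c * eta d d * X a b c d.
Proof.
transitivity (\sum_(p < 4) \sum_(q < 4) \sum_(r < 4)
     eta a p * eta b q * eta c r * eta d d * X p q r d).
  apply: eq_bigr => p _; apply: eq_bigr => q _; apply: eq_bigr => r _.
  by apply: sum_diag => s Hs; rewrite (eta_off Hs) !(mulr0, mul0r).
transitivity (\sum_(p < 4) \sum_(q < 4)
     eta a p * eta b q * eta c c * eta d d * X p q c d).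
  apply: eq_bigr => p _; apply: eq_bigr => q _.
  by apply: sum_diag => s Hs; rewrite (eta_off Hs) !(mulr0, mul0r).
transitivity (\sum_(p < 4)
     eta a p * eta b b * eta c c * eta d d * X p b c d).
  apply: eq_bigr => p _.
  by apply: sum_diag => s Hs; rewrite (eta_off Hs) !(mulr0, mul0r).
by apply: sum_diag => s Hs; rewrite (eta_off Hs) !(mulr0, mul0r).
Qed.

Lemma quad {R : realType} (e : 'I_4 -> 'I_4 -> R)
  (he0 : forall x, e i0 x = 0) (he0' : forall x, e x i0 = 0)
  (hs12 : e i2 i1 = e i1 i2) (hs13 : e i3 i1 = e i1 i3) (hs23 : e i3 i2 = e i2 i3)
  (ht : e i3 i3 = - e i1 i1 - e i2 i2) :
  \sum_(a < 4) \sum_(b < 4) \sum_(c < 4) \sum_(d < 4)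
    Wt e a b c d * (eta a a * eta b b * eta c c * eta d d * Wt e a b c d)
  = 8 * \sum_(a < 4) \sum_(b < 4) e a b * (eta a a * eta b b * e a b).
Proof.
rewrite !sum4 /Wt /d0 /eta /= !he0 !he0' hs12 hs13 hs23 ht.
ring.
Qed.

Lemma frame_G1 (R : realType) (C : tensor4 R)
  (A1 : forall a b c d, C a b c d = - C b a c d)
  (A2 : forall a b c d, C a b c d = - C a b d c)
  (A3 : forall a b c d, C a b c d = C c d a b)
  (B : forall a b c d, C a b c d + C a c d b + C a d b c = 0)
  (Htr : forall b d, - C i0 b i0 d + C i1 b i1 d + C i2 b i2 d + C i3 b i3 d = 0)
  (Hm : forall j k l, j != i0 -> k != i0 -> C j k l i0 = 0) :
  forall a b c d, C a b c d = Wt (fun x y => C x i0 i0 y) a b c d.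
Proof.
move=> a b c d.
case: (ord4P a) => ->; case: (ord4P b) => ->; case: (ord4P c) => ->; case: (ord4P d) => ->.
all: rewrite /Wt /d0 /eta /=.
- have h0 := B i0 i0 i0 i0. lra.
- have h0 := A2 i0 i0 i1 i0. have h1 := A3 i0 i1 i0 i0. have h2 := B i0 i1 i0 i0. lra.
- have h0 := A2 i0 i0 i2 i0. have h1 := A3 i0 i2 i0 i0. have h2 := B i0 i2 i0 i0. lra.
- have h0 := A2 i0 i0 i3 i0. have h1 := A3 i0 i3 i0 i0. have h2 := B i0 i3 i0 i0. lra.
- have h0 := A1 i0 i0 i1 i0. lra.
- have h0 := A2 i0 i0 i1 i1. lra.
- have h0 := A1 i0 i0 i1 i2. lra.
- have h0 := A1 i0 i0 i1 i3. lra.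
- have h0 := A1 i0 i0 i2 i0. lra.
- have h0 := A1 i0 i0 i2 i1. lra.
- have h0 := A2 i0 i0 i2 i2. lra.
- have h0 := A1 i0 i0 i2 i3. lra.
- have h0 := A1 i0 i0 i3 i0. lra.
- have h0 := A1 i0 i0 i3 i1. lra.
- have h0 := A1 i0 i0 i3 i2. lra.
- have h0 := A2 i0 i0 i3 i3. lra.
- have h0 := A2 i0 i1 i0 i0. lra.
- have h0 := A3 i1 i0 i0 i1. have h1 := A2 i0 i1 i1 i0. have h2 := B i0 i0 i0 i0. lra.
- have h0 := A1 i1 i0 i0 i2. lra.
- have h0 := A1 i1 i0 i0 i3. lra.
- have h0 := A2 i1 i0 i1 i0. have h1 := A1 i1 i0 i1 i0. have h2 := B i0 i0 i0 i0. lra.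
- have h0 := B i0 i1 i1 i1. lra.
- have h0 := A3 i1 i2 i0 i1. have h1 := Htr i0 i2. have h2 := A1 i2 i1 i0 i1. have h3 := B i2 i2 i2 i0. have h4 := B i3 i3 i2 i0. have h5 := A3 i1 i2 i1 i0. have h6 := Hm i3 i3 i2 erefl erefl. have h7 := B i2 i1 i1 i0. have h8 := Hm i2 i2 i2 erefl erefl. have h9 := A2 i3 i2 i3 i0. have h10 := A1 i2 i1 i1 i0. have h11 := Hm i1 i2 i1 erefl erefl. have h12 := Hm i3 i2 i3 erefl erefl. have h13 := A1 i2 i2 i0 i2. have h14 := A2 i2 i0 i1 i1. lra.
- have h0 := A3 i1 i3 i0 i1. have h1 := Htr i0 i3. have h2 := A3 i2 i3 i2 i0. have h3 := A1 i3 i1 i0 i1. have h4 := A3 i1 i3 i1 i0. have h5 := B i3 i3 i3 i0. have h6 := A2 i3 i3 i3 i0. have h7 := Hm i2 i3 i2 erefl erefl. have h8 := B i3 i1 i1 i0. have h9 := A2 i3 i0 i1 i1. have h10 := A1 i3 i1 i1 i0. have h11 := Hm i1 i3 i1 erefl erefl. lra.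
- have h0 := A1 i1 i0 i2 i0. have h1 := A2 i1 i0 i2 i0. lra.
- have h0 := Htr i0 i2. have h1 := A3 i2 i1 i0 i1. have h2 := B i2 i1 i1 i0. have h3 := B i2 i2 i2 i0. have h4 := B i3 i3 i2 i0. have h5 := A3 i1 i2 i1 i0. have h6 := Hm i3 i3 i2 erefl erefl. have h7 := Hm i2 i2 i2 erefl erefl. have h8 := A2 i3 i2 i3 i0. have h9 := Hm i1 i2 i1 erefl erefl. have h10 := Hm i3 i2 i3 erefl erefl. have h11 := A1 i2 i2 i0 i2. have h12 := Hm i2 i1 i1 erefl erefl. have h13 := A2 i2 i0 i1 i1. lra.
- have h0 := A2 i0 i1 i2 i2. lra.
- have h0 := A3 i2 i3 i0 i1. have h1 := A1 i3 i2 i0 i1. have h2 := A1 i3 i2 i1 i0. have h3 := Hm i2 i3 i1 erefl erefl. have h4 := A2 i3 i2 i1 i0. lra.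
- have h0 := A2 i1 i0 i3 i0. have h1 := A1 i1 i0 i3 i0. lra.
- have h0 := Htr i0 i3. have h1 := A3 i3 i1 i0 i1. have h2 := A3 i2 i3 i2 i0. have h3 := B i3 i1 i1 i0. have h4 := A3 i1 i3 i1 i0. have h5 := B i3 i3 i3 i0. have h6 := A2 i3 i3 i3 i0. have h7 := Hm i2 i3 i2 erefl erefl. have h8 := Hm i3 i1 i1 erefl erefl. have h9 := A2 i3 i0 i1 i1. have h10 := Hm i1 i3 i1 erefl erefl. lra.
- have h0 := A3 i3 i2 i0 i1. have h1 := A2 i3 i2 i1 i0. have h2 := Hm i3 i2 i1 erefl erefl. lra.
- have h0 := A2 i0 i1 i3 i3. lra.
- have h0 := A2 i0 i2 i0 i0. lra.
- have h0 := A1 i2 i0 i0 i1. lra.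
- have h0 := B i0 i0 i0 i0. have h1 := A3 i2 i0 i0 i2. have h2 := A2 i0 i2 i2 i0. lra.
- have h0 := A1 i2 i0 i0 i3. lra.
- have h0 := A2 i2 i0 i1 i0. have h1 := A1 i2 i0 i1 i0. lra.
- have h0 := A2 i0 i2 i1 i1. lra.
- have h0 := A1 i2 i0 i1 i2. have h1 := Htr i0 i1. have h2 := B i1 i1 i1 i0. have h3 := B i3 i3 i1 i0. have h4 := B i2 i2 i0 i1. have h5 := B i2 i2 i1 i0. have h6 := Hm i2 i2 i1 erefl erefl. have h7 := A1 i2 i2 i0 i1. have h8 := A2 i3 i1 i3 i0. have h9 := Hm i3 i1 i3 erefl erefl. have h10 := Hm i1 i1 i1 erefl erefl. have h11 := A2 i2 i1 i2 i0. have h12 := A3 i1 i1 i0 i1. have h13 := Hm i2 i1 i2 erefl erefl. have h14 := B i0 i1 i1 i1. have h15 := Hm i3 i3 i1 erefl erefl. lra.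
- have h0 := A1 i2 i0 i1 i3. have h1 := B i2 i3 i0 i1. have h2 := Hm i2 i1 i3 erefl erefl. have h3 := A1 i3 i2 i0 i1. have h4 := A3 i3 i0 i1 i2. have h5 := Hm i1 i2 i3 erefl erefl. have h6 := A1 i3 i1 i2 i0. have h7 := Hm i1 i3 i2 erefl erefl. have h8 := B i3 i2 i0 i1. lra.
- have h0 := A1 i2 i0 i2 i0. have h1 := A2 i2 i0 i2 i0. have h2 := B i0 i0 i0 i0. lra.
- have h0 := A3 i2 i1 i0 i2. have h1 := Htr i0 i1. have h2 := B i1 i1 i1 i0. have h3 := B i3 i3 i1 i0. have h4 := B i2 i2 i1 i0. have h5 := A2 i2 i1 i2 i0. have h6 := Hm i2 i2 i1 erefl erefl. have h7 := A2 i3 i1 i3 i0. have h8 := Hm i3 i1 i3 erefl erefl. have h9 := Hm i1 i1 i1 erefl erefl. have h10 := A3 i1 i1 i0 i1. have h11 := Hm i2 i1 i2 erefl erefl. have h12 := B i0 i1 i1 i1. have h13 := Hm i3 i3 i1 erefl erefl. lra.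
- have h0 := B i0 i2 i2 i2. lra.
- have h0 := Htr i0 i3. have h1 := A3 i2 i3 i0 i2. have h2 := A3 i2 i3 i2 i0. have h3 := A3 i1 i3 i1 i0. have h4 := A1 i3 i2 i0 i2. have h5 := B i3 i3 i3 i0. have h6 := A2 i3 i3 i3 i0. have h7 := B i3 i2 i2 i0. have h8 := A2 i3 i0 i2 i2. have h9 := A1 i3 i2 i2 i0. have h10 := Hm i2 i3 i2 erefl erefl. have h11 := Hm i1 i3 i1 erefl erefl. lra.
- have h0 := A1 i2 i0 i3 i0. have h1 := A2 i2 i0 i3 i0. lra.
- have h0 := A3 i3 i1 i0 i2. have h1 := B i3 i2 i1 i0. have h2 := A1 i3 i1 i2 i0. have h3 := Hm i3 i1 i2 erefl erefl. have h4 := B i2 i3 i0 i1. have h5 := A1 i3 i2 i0 i1. have h6 := A3 i2 i0 i1 i3. have h7 := A3 i3 i0 i2 i1. have h8 := A2 i3 i2 i1 i0. lra.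
- have h0 := A3 i3 i2 i0 i2. have h1 := Htr i0 i3. have h2 := A3 i2 i3 i2 i0. have h3 := B i3 i2 i2 i0. have h4 := A3 i1 i3 i1 i0. have h5 := B i3 i3 i3 i0. have h6 := A2 i3 i3 i3 i0. have h7 := A2 i3 i0 i2 i2. have h8 := Hm i2 i3 i2 erefl erefl. have h9 := Hm i1 i3 i1 erefl erefl. have h10 := Hm i3 i2 i2 erefl erefl. lra.
- have h0 := A2 i0 i2 i3 i3. lra.
- have h0 := A2 i0 i3 i0 i0. lra.
- have h0 := A1 i3 i0 i0 i1. lra.
- have h0 := A1 i3 i0 i0 i2. lra.
- have h0 := B i0 i0 i0 i0. have h1 := A3 i3 i0 i0 i3. have h2 := A2 i0 i3 i3 i0. lra.
- have h0 := A2 i3 i0 i1 i0. have h1 := A1 i3 i0 i1 i0. lra.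
- have h0 := A2 i0 i3 i1 i1. lra.
- have h0 := A1 i3 i0 i1 i2. have h1 := B i3 i2 i0 i1. have h2 := Hm i3 i1 i2 erefl erefl. have h3 := A1 i2 i1 i3 i0. have h4 := Hm i1 i2 i3 erefl erefl. have h5 := A3 i3 i0 i2 i1. have h6 := B i3 i2 i1 i0. have h7 := A2 i3 i2 i1 i0. have h8 := A2 i1 i3 i2 i0. have h9 := Hm i1 i3 i2 erefl erefl. have h10 := A1 i3 i1 i0 i2. lra.
- have h0 := A1 i3 i0 i1 i3. have h1 := Htr i0 i1. have h2 := B i3 i3 i0 i1. have h3 := B i1 i1 i1 i0. have h4 := B i3 i3 i1 i0. have h5 := B i2 i2 i1 i0. have h6 := Hm i2 i2 i1 erefl erefl. have h7 := A2 i3 i1 i3 i0. have h8 := A2 i3 i3 i1 i0. have h9 := Hm i3 i1 i3 erefl erefl. have h10 := Hm i1 i1 i1 erefl erefl. have h11 := A2 i2 i1 i2 i0. have h12 := A3 i1 i1 i0 i1. have h13 := Hm i2 i1 i2 erefl erefl. have h14 := B i0 i1 i1 i1. have h15 := Hm i3 i3 i1 erefl erefl. lra.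
- have h0 := A1 i3 i0 i2 i0. have h1 := A2 i3 i0 i2 i0. lra.
- have h0 := A1 i3 i0 i2 i1. have h1 := B i3 i2 i1 i0. have h2 := A2 i2 i0 i3 i1. have h3 := A3 i3 i1 i2 i0. have h4 := B i2 i3 i0 i1. have h5 := A1 i3 i2 i0 i1. have h6 := A2 i3 i2 i1 i0. have h7 := Hm i2 i1 i3 erefl erefl. have h8 := A2 i3 i1 i2 i0. lra.
- have h0 := A2 i0 i3 i2 i2. lra.
- have h0 := Htr i0 i2. have h1 := A1 i3 i0 i2 i3. have h2 := B i3 i3 i0 i2. have h3 := B i2 i2 i2 i0. have h4 := B i3 i3 i2 i0. have h5 := A3 i1 i2 i1 i0. have h6 := Hm i3 i3 i2 erefl erefl. have h7 := Hm i2 i2 i2 erefl erefl. have h8 := A2 i3 i2 i3 i0. have h9 := Hm i1 i2 i1 erefl erefl. have h10 := Hm i3 i2 i3 erefl erefl. have h11 := A1 i3 i3 i0 i2. have h12 := A1 i2 i2 i0 i2. lra.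
- have h0 := A1 i3 i0 i3 i0. have h1 := B i0 i0 i0 i0. have h2 := A2 i3 i0 i3 i0. lra.
- have h0 := A3 i3 i1 i0 i3. have h1 := Htr i0 i1. have h2 := B i1 i1 i1 i0. have h3 := B i3 i3 i1 i0. have h4 := A2 i3 i1 i3 i0. have h5 := B i2 i2 i1 i0. have h6 := Hm i2 i2 i1 erefl erefl. have h7 := Hm i3 i1 i3 erefl erefl. have h8 := Hm i1 i1 i1 erefl erefl. have h9 := A2 i2 i1 i2 i0. have h10 := A3 i1 i1 i0 i1. have h11 := Hm i2 i1 i2 erefl erefl. have h12 := B i0 i1 i1 i1. have h13 := Hm i3 i3 i1 erefl erefl. lra.
- have h0 := Htr i0 i2. have h1 := A3 i3 i2 i0 i3. have h2 := B i2 i2 i2 i0. have h3 := B i3 i3 i2 i0. have h4 := A2 i3 i2 i3 i0. have h5 := A3 i1 i2 i1 i0. have h6 := Hm i3 i3 i2 erefl erefl. have h7 := Hm i2 i2 i2 erefl erefl. have h8 := Hm i1 i2 i1 erefl erefl. have h9 := Hm i3 i2 i3 erefl erefl. have h10 := A1 i2 i2 i0 i2. lra.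
- have h0 := B i0 i3 i3 i3. lra.
- have h0 := B i1 i0 i0 i0. lra.
- have h0 := B i0 i0 i0 i0. lra.
- lra.
- lra.
- have h0 := A2 i1 i0 i1 i0. have h1 := B i0 i0 i0 i0. lra.
- have h0 := A2 i1 i0 i1 i1. lra.
- have h0 := Htr i0 i2. have h1 := A3 i1 i2 i1 i0. have h2 := A3 i2 i2 i2 i0. have h3 := A3 i3 i2 i3 i0. have h4 := A2 i0 i2 i0 i0. have h5 := Htr i2 i0. have h6 := Hm i1 i2 i1 erefl erefl. lra.
- have h0 := Htr i0 i3. have h1 := A3 i1 i3 i1 i0. have h2 := A3 i2 i3 i2 i0. have h3 := A1 i3 i0 i0 i0. have h4 := Htr i3 i0. have h5 := Hm i1 i3 i1 erefl erefl. have h6 := A1 i0 i0 i3 i0. have h7 := A3 i3 i0 i0 i0. have h8 := A3 i3 i3 i3 i0. lra.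
- have h0 := A2 i1 i0 i2 i0. lra.
- have h0 := Htr i0 i2. have h1 := A3 i2 i1 i1 i0. have h2 := A3 i2 i2 i2 i0. have h3 := A3 i3 i2 i3 i0. have h4 := A2 i0 i2 i0 i0. have h5 := Htr i2 i0. have h6 := Hm i2 i1 i1 erefl erefl. have h7 := A3 i1 i2 i1 i0. lra.
- have h0 := A2 i1 i0 i2 i2. lra.
- have h0 := A3 i2 i3 i1 i0. have h1 := Hm i2 i3 i1 erefl erefl. lra.
- have h0 := A2 i1 i0 i3 i0. lra.
- have h0 := A3 i3 i1 i1 i0. have h1 := Htr i0 i3. have h2 := Hm i3 i1 i1 erefl erefl. have h3 := A3 i2 i3 i2 i0. have h4 := A1 i3 i0 i0 i0. have h5 := Htr i3 i0. have h6 := A3 i1 i3 i1 i0. have h7 := A1 i0 i0 i3 i0. have h8 := A3 i3 i0 i0 i0. have h9 := A3 i3 i3 i3 i0. lra.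
- have h0 := A3 i3 i2 i1 i0. have h1 := Hm i3 i2 i1 erefl erefl. lra.
- have h0 := A2 i1 i0 i3 i3. lra.
- have h0 := Hm i1 i1 i0 erefl erefl. lra.
- have h0 := A1 i1 i1 i0 i1. lra.
- have h0 := A1 i1 i1 i0 i2. lra.
- have h0 := A1 i1 i1 i0 i3. lra.
- have h0 := Hm i1 i1 i1 erefl erefl. lra.
- have h0 := B i1 i1 i1 i1. lra.
- have h0 := A2 i1 i1 i2 i1. have h1 := A3 i1 i2 i1 i1. have h2 := B i1 i2 i1 i1. lra.
- have h0 := A2 i1 i1 i3 i1. have h1 := A3 i1 i3 i1 i1. have h2 := B i1 i3 i1 i1. lra.
- have h0 := Hm i1 i1 i2 erefl erefl. lra.
- have h0 := A1 i1 i1 i2 i1. lra.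
- have h0 := A2 i1 i1 i2 i2. lra.
- have h0 := A1 i1 i1 i2 i3. lra.
- have h0 := Hm i1 i1 i3 erefl erefl. lra.
- have h0 := A1 i1 i1 i3 i1. lra.
- have h0 := A1 i1 i1 i3 i2. lra.
- have h0 := A2 i1 i1 i3 i3. lra.
- have h0 := Hm i1 i2 i0 erefl erefl. lra.
- have h0 := B i2 i0 i0 i0. have h1 := A1 i2 i1 i0 i1. have h2 := B i2 i1 i1 i0. have h3 := A1 i2 i1 i1 i0. have h4 := Hm i1 i2 i1 erefl erefl. have h5 := A3 i2 i0 i1 i1. have h6 := Hm i1 i1 i2 erefl erefl. lra.
- have h0 := A1 i2 i1 i0 i2. have h1 := B i1 i0 i0 i0. have h2 := A1 i2 i1 i2 i0. have h3 := Hm i1 i2 i2 erefl erefl. have h4 := A2 i2 i1 i2 i0. lra.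
- have h0 := A1 i2 i1 i0 i3. have h1 := A3 i3 i0 i1 i2. have h2 := Hm i1 i2 i3 erefl erefl. have h3 := A3 i2 i1 i0 i3. have h4 := A2 i0 i3 i2 i1. have h5 := A1 i3 i0 i1 i2. lra.
- have h0 := B i2 i0 i0 i0. have h1 := Hm i1 i2 i1 erefl erefl. lra.
- have h0 := A2 i1 i2 i1 i1. lra.
- have h0 := B i1 i1 i0 i0. have h1 := A1 i2 i1 i1 i2. have h2 := Htr i2 i2. have h3 := B i2 i2 i0 i0. have h4 := B i2 i2 i2 i2. have h5 := A1 i2 i0 i2 i0. have h6 := Htr i0 i0. have h7 := Hm i1 i1 i0 erefl erefl. have h8 := B i3 i3 i2 i2. have h9 := A1 i1 i0 i1 i0. have h10 := B i0 i2 i2 i0. have h11 := B i2 i2 i1 i1. have h12 := B i0 i1 i1 i0. have h13 := Htr i1 i1. have h14 := Hm i2 i2 i0 erefl erefl. have h15 := A2 i0 i0 i2 i2. have h16 := A2 i2 i2 i1 i1. have h17 := B i3 i3 i0 i0. have h18 := B i3 i3 i1 i1. have h19 := B i0 i0 i0 i0. have h20 := A3 i3 i3 i2 i2. have h21 := A2 i0 i0 i1 i1. have h22 := A1 i3 i2 i2 i3. have h23 := B i1 i1 i1 i1. have h24 := A2 i2 i2 i3 i3. have h25 := A3 i3 i0 i0 i3. have h26 := Htr i3 i3. have h27 := Hm i3 i3 i0 erefl erefl. have h28 := B i0 i3 i3 i0. have h29 := A3 i3 i3 i1 i1. have h30 := A1 i3 i1 i1 i3. have h31 := A2 i0 i0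 i3 i3. have h32 := B i3 i3 i3 i3. have h33 := A2 i1 i1 i3 i3. lra.
- have h0 := Htr i2 i3. have h1 := B i2 i3 i0 i0. have h2 := A3 i3 i0 i2 i0. have h3 := A2 i3 i2 i3 i3. have h4 := Hm i2 i3 i0 erefl erefl. have h5 := A2 i0 i3 i2 i0. have h6 := A1 i3 i0 i2 i0. have h7 := A3 i0 i3 i0 i2. have h8 := A2 i2 i2 i3 i2. have h9 := A3 i2 i3 i2 i2. have h10 := B i2 i3 i2 i2. lra.
- have h0 := Hm i1 i2 i2 erefl erefl. have h1 := B i1 i0 i0 i0. lra.
- have h0 := B i1 i1 i0 i0. have h1 := A1 i2 i1 i2 i1. have h2 := B i2 i2 i0 i0. have h3 := A1 i2 i0 i2 i0. have h4 := Htr i0 i0. have h5 := B i0 i1 i1 i0. have h6 := A1 i1 i0 i1 i0. have h7 := Hm i1 i1 i0 erefl erefl. have h8 := Htr i1 i1. have h9 := A1 i2 i1 i1 i2. have h10 := Htr i2 i2. have h11 := B i2 i2 i1 i1. have h12 := B i0 i2 i2 i0. have h13 := Hm i2 i2 i0 erefl erefl. have h14 := B i2 i2 i2 i2. have h15 := A2 i0 i0 i2 i2. have h16 := B i3 i3 i2 i2. have h17 := A2 i2 i2 i1 i1. have h18 := B i3 i3 i0 i0. have h19 := B i3 i3 i1 i1. have h20 := B i0 i0 i0 i0. have h21 := A2 i0 i0 i1 i1. have h22 := B i1 i1 i1 i1. have h23 := A3 i3 i0 i0 i3. have h24 := B i0 i3 i3 i0. have h25 := A3 i3 i3 i1 i1.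 have h26 := A1 i3 i1 i1 i3. have h27 := A3 i3 i3 i2 i2. have h28 := A1 i3 i2 i2 i3. have h29 := Hm i3 i3 i0 erefl erefl. have h30 := A2 i2 i2 i3 i3. have h31 := Htr i3 i3. have h32 := A2 i0 i0 i3 i3. have h33 := A2 i1 i1 i3 i3. have h34 := B i3 i3 i3 i3. lra.
- have h0 := B i1 i2 i2 i2. lra.
- have h0 := B i1 i3 i0 i0. have h1 := A3 i2 i3 i1 i2. have h2 := A1 i3 i2 i1 i2. have h3 := Hm i1 i3 i0 erefl erefl. have h4 := A3 i3 i0 i1 i0. have h5 := A2 i3 i1 i3 i3. have h6 := A3 i3 i3 i3 i1. have h7 := A2 i1 i1 i3 i1. have h8 := B i1 i3 i1 i1. have h9 := A2 i3 i0 i1 i0. have h10 := A2 i3 i2 i2 i1. have h11 := A1 i3 i0 i0 i1. have h12 := Htr i3 i1. have h13 := A1 i3 i2 i2 i1. lra.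
- have h0 := Hm i1 i2 i3 erefl erefl. lra.
- have h0 := A3 i3 i1 i1 i2. have h1 := B i2 i3 i0 i0. have h2 := A3 i3 i0 i2 i0. have h3 := Hm i2 i3 i0 erefl erefl. have h4 := B i3 i2 i1 i1. have h5 := A2 i1 i3 i2 i1. have h6 := Htr i3 i2. have h7 := A3 i3 i3 i3 i2. have h8 := A1 i3 i1 i2 i1. have h9 := A3 i3 i2 i1 i1. have h10 := B i2 i3 i2 i2. have h11 := A1 i1 i1 i3 i2. have h12 := A2 i2 i2 i3 i2. have h13 := A2 i3 i0 i2 i0. have h14 := A2 i3 i2 i3 i3. have h15 := A1 i3 i0 i0 i2. lra.
- have h0 := B i1 i3 i0 i0. have h1 := A3 i3 i2 i1 i2. have h2 := B i3 i2 i2 i1. have h3 := Hm i1 i3 i0 erefl erefl. have h4 := A3 i3 i0 i1 i0. have h5 := A3 i3 i1 i2 i2. have h6 := A1 i3 i2 i2 i1. have h7 := A2 i3 i0 i1 i0. have h8 := A2 i1 i1 i3 i1. have h9 := B i1 i3 i1 i1. have h10 := A2 i3 i1 i3 i3. have h11 := A3 i3 i3 i3 i1. have h12 := A1 i3 i0 i0 i1. have h13 := Htr i3 i1. have h14 := A1 i2 i2 i1 i3. have h15 := A2 i2 i2 i3 i1. lra.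
- have h0 := A2 i1 i2 i3 i3. lra.
- have h0 := Hm i1 i3 i0 erefl erefl. lra.
- have h0 := B i3 i0 i0 i0. have h1 := A1 i3 i1 i0 i1. have h2 := A2 i3 i1 i1 i0. have h3 := A1 i3 i1 i1 i0. have h4 := Hm i1 i3 i1 erefl erefl. lra.
- have h0 := A1 i3 i1 i0 i2. have h1 := A1 i3 i1 i2 i0. have h2 := Hm i1 i3 i2 erefl erefl. have h3 := A2 i3 i1 i2 i0. lra.
- have h0 := A1 i3 i1 i0 i3. have h1 := B i1 i0 i0 i0. have h2 := A1 i3 i1 i3 i0. have h3 := Hm i1 i3 i3 erefl erefl. have h4 := A2 i3 i1 i3 i0. lra.
- have h0 := Hm i1 i3 i1 erefl erefl. have h1 := B i3 i0 i0 i0. lra.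
- have h0 := A2 i1 i3 i1 i1. lra.
- have h0 := Htr i3 i2. have h1 := B i3 i2 i0 i0. have h2 := A3 i3 i0 i2 i0. have h3 := A2 i3 i3 i3 i2. have h4 := A3 i3 i3 i3 i2. have h5 := B i3 i3 i3 i2. have h6 := A2 i2 i3 i2 i2. have h7 := A2 i0 i2 i3 i0. have h8 := A1 i2 i0 i3 i0. have h9 := A3 i0 i3 i0 i2. have h10 := Hm i3 i2 i0 erefl erefl. lra.
- have h0 := B i1 i1 i0 i0. have h1 := A1 i3 i1 i1 i3. have h2 := Htr i3 i3. have h3 := B i3 i3 i0 i0. have h4 := Hm i1 i1 i0 erefl erefl. have h5 := B i0 i3 i3 i0. have h6 := A1 i1 i0 i1 i0. have h7 := Htr i0 i0. have h8 := A1 i3 i0 i3 i0. have h9 := B i3 i3 i3 i3. have h10 := A1 i3 i2 i2 i3. have h11 := B i0 i1 i1 i0. have h12 := B i3 i3 i1 i1. have h13 := Htr i1 i1. have h14 := Hm i3 i3 i0 erefl erefl. have h15 := B i2 i2 i0 i0. have h16 := B i2 i2 i1 i1. have h17 := A2 i3 i3 i1 i1. have h18 := B i0 i0 i0 i0. have h19 := A2 i0 i0 i1 i1. have h20 := B i3 i3 i2 i2. have h21 := B i1 i1 i1 i1. have h22 := A2 i0 i0 i3 i3. have h23 := A3 i2 i1 i1 i2. have h24 := Hm i2 i2 i0 erefl erefl. have h25 := Htr i2 i2. have h26 := A3 i2 i2 i1 i1. have h27 := A3 i2 i0 i0 i2. have h28 := B i1 i2 i2 i1. have h29 := A2 i3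 i3 i2 i2. have h30 := B i0 i2 i2 i0. have h31 := B i2 i2 i2 i2. have h32 := A2 i0 i0 i2 i2. lra.
- have h0 := Hm i1 i3 i2 erefl erefl. lra.
- have h0 := B i3 i2 i0 i0. have h1 := A1 i3 i1 i2 i1. have h2 := A3 i3 i0 i2 i0. have h3 := B i3 i2 i1 i1. have h4 := A2 i0 i3 i2 i0. have h5 := Htr i3 i2. have h6 := Hm i3 i2 i0 erefl erefl. have h7 := A1 i3 i1 i1 i2. have h8 := A3 i3 i3 i3 i2. have h9 := B i2 i3 i0 i0. have h10 := A2 i3 i2 i1 i1. have h11 := Hm i2 i3 i0 erefl erefl. have h12 := B i2 i3 i2 i2. have h13 := A3 i2 i0 i0 i3. have h14 := A2 i2 i2 i3 i2. have h15 := A2 i3 i2 i3 i3. lra.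
- have h0 := A2 i1 i3 i2 i2. lra.
- have h0 := B i1 i2 i0 i0. have h1 := A1 i3 i1 i2 i3. have h2 := Hm i1 i2 i0 erefl erefl. have h3 := A3 i2 i0 i1 i0. have h4 := B i3 i3 i1 i2. have h5 := A1 i2 i0 i0 i1. have h6 := Htr i2 i1. have h7 := A2 i1 i1 i2 i1. have h8 := B i1 i2 i1 i1. have h9 := A2 i2 i1 i2 i2. have h10 := A3 i2 i2 i2 i1. have h11 := A2 i3 i3 i2 i1. have h12 := B i2 i1 i0 i0. have h13 := Hm i2 i1 i0 erefl erefl. have h14 := A2 i2 i1 i3 i3. have h15 := A3 i3 i3 i2 i1. lra.
- have h0 := B i1 i0 i0 i0. have h1 := Hm i1 i3 i3 erefl erefl. lra.
- have h0 := A1 i3 i1 i3 i1. have h1 := B i3 i3 i0 i0. have h2 := B i1 i1 i0 i0. have h3 := A1 i3 i0 i3 i0. have h4 := Htr i0 i0. have h5 := B i0 i1 i1 i0. have h6 := A1 i1 i0 i1 i0. have h7 := A1 i3 i1 i1 i3. have h8 := B i3 i3 i1 i1. have h9 := Hm i1 i1 i0 erefl erefl. have h10 := Htr i1 i1. have h11 := B i0 i3 i3 i0. have h12 := Htr i3 i3. have h13 := Hm i3 i3 i0 erefl erefl. have h14 := B i2 i2 i0 i0. have h15 := B i2 i2 i1 i1. have h16 := A2 i3 i3 i1 i1. have h17 := B i3 i3 i3 i3. have h18 := A1 i3 i2 i2 i3. have h19 := B i0 i0 i0 i0. have h20 := A2 i0 i0 i1 i1. have h21 := B i1 i1 i1 i1.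 have h22 := A2 i0 i0 i3 i3. have h23 := A3 i2 i2 i1 i1. have h24 := A1 i2 i0 i0 i2. have h25 := A3 i2 i1 i1 i2. have h26 := B i1 i2 i2 i1. have h27 := B i3 i3 i2 i2. have h28 := Hm i2 i2 i0 erefl erefl. have h29 := Htr i2 i2. have h30 := A2 i3 i3 i2 i2. have h31 := B i2 i2 i2 i2. lra.
- have h0 := B i1 i2 i0 i0. have h1 := A3 i3 i2 i1 i3. have h2 := Hm i1 i2 i0 erefl erefl. have h3 := A2 i3 i2 i3 i1. have h4 := A3 i2 i0 i1 i0. have h5 := A1 i2 i0 i0 i1. have h6 := Htr i2 i1. have h7 := A2 i1 i1 i2 i1. have h8 := B i1 i2 i1 i1. have h9 := A2 i2 i1 i2 i2. have h10 := A3 i2 i2 i2 i1. have h11 := B i2 i1 i0 i0. have h12 := Hm i2 i1 i0 erefl erefl. lra.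
- have h0 := B i1 i3 i3 i3. lra.
- have h0 := B i2 i0 i0 i0. lra.
- lra.
- have h0 := B i0 i0 i0 i0. lra.
- lra.
- have h0 := A2 i2 i0 i1 i0. lra.
- have h0 := A2 i2 i0 i1 i1. lra.
- have h0 := B i2 i2 i0 i1. have h1 := Htr i0 i1. have h2 := A3 i1 i1 i1 i0. have h3 := A2 i2 i2 i1 i0. have h4 := A1 i1 i0 i0 i0. have h5 := Htr i1 i0. have h6 := A3 i3 i1 i3 i0. have h7 := A2 i2 i1 i2 i0. have h8 := A3 i2 i1 i2 i0. have h9 := Hm i2 i1 i2 erefl erefl. have h10 := B i2 i2 i1 i0. have h11 := A1 i0 i0 i1 i0. have h12 := A3 i1 i0 i0 i0. lra.
- have h0 := B i2 i3 i0 i1. have h1 := A2 i2 i3 i1 i0. have h2 := A1 i3 i1 i2 i0. have h3 := Hm i1 i3 i2 erefl erefl. have h4 := A2 i2 i1 i3 i0. have h5 := B i2 i3 i1 i0. have h6 := A3 i3 i1 i2 i0. lra.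
- have h0 := A2 i2 i0 i2 i0. have h1 := B i0 i0 i0 i0. lra.
- have h0 := Htr i0 i1. have h1 := B i0 i1 i0 i0. have h2 := A3 i1 i1 i1 i0. have h3 := A1 i1 i0 i0 i0. have h4 := Htr i1 i0. have h5 := A3 i3 i1 i3 i0. have h6 := Hm i2 i1 i2 erefl erefl. have h7 := A1 i0 i0 i1 i0. have h8 := A3 i1 i0 i0 i0. lra.
- have h0 := A2 i2 i0 i2 i2. lra.
- have h0 := Htr i0 i3. have h1 := A3 i2 i3 i2 i0. have h2 := A1 i3 i0 i0 i0. have h3 := Htr i3 i0. have h4 := A3 i1 i3 i1 i0. have h5 := A1 i0 i0 i3 i0. have h6 := A3 i3 i0 i0 i0. have h7 := Hm i2 i3 i2 erefl erefl. have h8 := A3 i3 i3 i3 i0. lra.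
- have h0 := A2 i2 i0 i3 i0. lra.
- have h0 := A3 i3 i1 i2 i0. have h1 := Hm i3 i1 i2 erefl erefl. lra.
- have h0 := Htr i0 i3. have h1 := A3 i3 i2 i2 i0. have h2 := A3 i2 i3 i2 i0. have h3 := A1 i3 i0 i0 i0. have h4 := Htr i3 i0. have h5 := A3 i1 i3 i1 i0. have h6 := A1 i0 i0 i3 i0. have h7 := A3 i3 i0 i0 i0. have h8 := Hm i3 i2 i2 erefl erefl. have h9 := A3 i3 i3 i3 i0. lra.
- have h0 := A2 i2 i0 i3 i3. lra.
- have h0 := Hm i2 i1 i0 erefl erefl. lra.
- have h0 := B i2 i0 i0 i0. have h1 := B i2 i1 i1 i0. have h2 := Hm i2 i1 i1 erefl erefl. have h3 := A2 i2 i0 i1 i1. lra.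
- have h0 := B i2 i2 i1 i0. have h1 := B i1 i0 i0 i0. have h2 := Hm i2 i2 i1 erefl erefl. have h3 := A3 i2 i1 i2 i0. have h4 := Hm i2 i1 i2 erefl erefl. lra.
- have h0 := B i2 i3 i1 i0. have h1 := A2 i2 i3 i1 i0. have h2 := B i2 i3 i0 i1. have h3 := Hm i2 i1 i3 erefl erefl. have h4 := A2 i2 i0 i3 i1. lra.
- have h0 := B i2 i0 i0 i0. have h1 := Hm i2 i1 i1 erefl erefl. lra.
- have h0 := B i2 i1 i1 i1. lra.
- have h0 := B i1 i1 i0 i0. have h1 := B i2 i2 i0 i0. have h2 := B i2 i2 i1 i1. have h3 := A1 i2 i0 i2 i0. have h4 := Htr i0 i0. have h5 := B i0 i1 i1 i0. have h6 := A1 i1 i0 i1 i0. have h7 := Hm i1 i1 i0 erefl erefl. have h8 := B i1 i2 i2 i1. have h9 := A1 i2 i1 i2 i1. have h10 := Htr i1 i1. have h11 := Htr i2 i2. have h12 := B i0 i2 i2 i0. have h13 := A3 i2 i2 i1 i1. have h14 := Hm i2 i2 i0 erefl erefl. have h15 := B i2 i2 i2 i2. have h16 := A2 i1 i1 i2 i2. have h17 := A2 i0 i0 i2 i2. have h18 := B i3 i3 i2 i2. have h19 := B i3 i3 i0 i0. have h20 := B i3 i3 i1 i1. have h21 := B i0 i0 i0 i0. have h22 := A2 i0 i0 i1 i1. have h23 := B i1 i1 i1 i1. have h24 := A3 i3 i0 i0 i3. have h25 := B i0 i3 i3 i0. have h26 := A3 i3 i3 i1 i1. have h27 := A1 i3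 i1 i1 i3. have h28 := A3 i3 i3 i2 i2. have h29 := A1 i3 i2 i2 i3. have h30 := Hm i3 i3 i0 erefl erefl. have h31 := A2 i2 i2 i3 i3. have h32 := Htr i3 i3. have h33 := A2 i0 i0 i3 i3. have h34 := A2 i1 i1 i3 i3. have h35 := B i3 i3 i3 i3. lra.
- have h0 := B i2 i3 i1 i1. have h1 := B i2 i3 i0 i0. have h2 := A1 i3 i2 i1 i1. have h3 := A3 i3 i0 i2 i0. have h4 := Hm i2 i3 i0 erefl erefl. have h5 := A3 i3 i1 i2 i1. have h6 := B i3 i2 i1 i1. have h7 := A2 i2 i2 i3 i2. have h8 := B i2 i3 i2 i2. have h9 := A1 i3 i1 i1 i2. have h10 := Htr i3 i2. have h11 := A2 i3 i0 i2 i0. have h12 := A2 i3 i2 i3 i3. have h13 := A3 i3 i3 i3 i2. have h14 := A2 i3 i1 i2 i1. have h15 := A1 i3 i0 i0 i2. lra.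
- have h0 := B i1 i0 i0 i0. have h1 := Hm i2 i1 i2 erefl erefl. lra.
- have h0 := B i2 i2 i1 i1. have h1 := Htr i1 i1. have h2 := B i2 i2 i0 i0. have h3 := B i1 i1 i0 i0. have h4 := A1 i2 i0 i2 i0. have h5 := Htr i0 i0. have h6 := Hm i1 i1 i0 erefl erefl. have h7 := A1 i1 i0 i1 i0. have h8 := A3 i2 i2 i1 i1. have h9 := B i0 i2 i2 i0. have h10 := Htr i2 i2. have h11 := A3 i2 i1 i1 i2. have h12 := B i0 i1 i1 i0. have h13 := B i1 i2 i2 i1. have h14 := B i3 i3 i1 i1. have h15 := B i1 i1 i1 i1. have h16 := Hm i2 i2 i0 erefl erefl. have h17 := B i2 i2 i2 i2. have h18 := A2 i0 i0 i2 i2. have h19 := B i3 i3 i2 i2. have h20 := A3 i3 i3 i1 i1. have h21 := B i3 i3 i0 i0. have h22 := A1 i3 i1 i1 i3. have h23 := B i0 i0 i0 i0. have h24 := A2 i0 i0 i1 i1. have h25 := A3 i3 i0 i0 i3. have h26 := A2 i1 i1 i3 i3. have h27 := Htr i3 i3. have h28 := Hm i3 i3 i0 erefl erefl. have h29 := B i0 i3 i3 i0. have h30 := A3 i3 i3 i2 i2. have h31 := A1 i3 i2 i2 i3. have h32 := A2 i2 i2 i3 i3. have h33 := A2 i0 i0 i3 i3. have h34 := B i3 i3 i3 i3. lra.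
- have h0 := A2 i2 i1 i2 i2. lra.
- have h0 := Htr i1 i3. have h1 := B i1 i3 i0 i0. have h2 := A2 i1 i1 i3 i1. have h3 := A3 i1 i3 i1 i1. have h4 := B i1 i3 i1 i1. have h5 := Hm i1 i3 i0 erefl erefl. have h6 := A2 i0 i1 i3 i0. have h7 := A2 i3 i1 i3 i3. have h8 := A1 i1 i0 i3 i0. lra.
- have h0 := Hm i2 i1 i3 erefl erefl. lra.
- have h0 := A3 i3 i1 i2 i1. have h1 := B i2 i3 i0 i0. have h2 := A3 i3 i0 i2 i0. have h3 := B i3 i2 i1 i1. have h4 := Hm i2 i3 i0 erefl erefl. have h5 := A3 i3 i2 i1 i1. have h6 := A1 i3 i1 i1 i2. have h7 := A2 i2 i2 i3 i2. have h8 := B i2 i3 i2 i2. have h9 := Htr i3 i2. have h10 := A2 i3 i0 i2 i0. have h11 := A1 i1 i1 i2 i3. have h12 := A2 i1 i1 i3 i2. have h13 := A2 i3 i2 i3 i3. have h14 := A3 i3 i3 i3 i2. have h15 := A1 i3 i0 i0 i2. lra.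
- have h0 := B i1 i3 i0 i0. have h1 := A3 i3 i2 i2 i1. have h2 := B i3 i2 i2 i1. have h3 := A2 i2 i3 i2 i1. have h4 := Htr i3 i1. have h5 := Hm i1 i3 i0 erefl erefl. have h6 := A3 i3 i0 i1 i0. have h7 := A3 i3 i1 i2 i2. have h8 := B i1 i3 i1 i1. have h9 := A1 i2 i2 i3 i1. have h10 := A2 i3 i0 i1 i0. have h11 := A2 i1 i1 i3 i1. have h12 := A1 i3 i2 i1 i2. have h13 := A1 i3 i0 i0 i1. have h14 := A1 i3 i3 i3 i1. lra.
- have h0 := A2 i2 i1 i3 i3. lra.
- have h0 := Hm i2 i2 i0 erefl erefl. lra.
- have h0 := A1 i2 i2 i0 i1. lra.
- have h0 := A1 i2 i2 i0 i2. lra.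
- have h0 := A1 i2 i2 i0 i3. lra.
- have h0 := Hm i2 i2 i1 erefl erefl. lra.
- have h0 := A2 i2 i2 i1 i1. lra.
- have h0 := A1 i2 i2 i1 i2. lra.
- have h0 := A1 i2 i2 i1 i3. lra.
- have h0 := Hm i2 i2 i2 erefl erefl. lra.
- have h0 := A2 i2 i2 i2 i1. have h1 := A3 i2 i2 i2 i1. have h2 := B i2 i2 i2 i1. lra.
- have h0 := B i2 i2 i2 i2. lra.
- have h0 := A2 i2 i2 i3 i2. have h1 := A3 i2 i3 i2 i2. have h2 := B i2 i3 i2 i2. lra.
- have h0 := Hm i2 i2 i3 erefl erefl. lra.
- have h0 := A1 i2 i2 i3 i1. lra.
- have h0 := A1 i2 i2 i3 i2. lra.
- have h0 := A2 i2 i2 i3 i3. lra.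
- have h0 := Hm i2 i3 i0 erefl erefl. lra.
- have h0 := A1 i3 i2 i0 i1. have h1 := A1 i3 i2 i1 i0. have h2 := Hm i2 i3 i1 erefl erefl. have h3 := A2 i3 i2 i1 i0. lra.
- have h0 := B i3 i0 i0 i0. have h1 := A1 i3 i2 i0 i2. have h2 := A2 i3 i2 i2 i0. have h3 := A1 i3 i2 i2 i0. have h4 := Hm i2 i3 i2 erefl erefl. lra.
- have h0 := B i2 i0 i0 i0. have h1 := A1 i3 i2 i0 i3. have h2 := A1 i3 i2 i3 i0. have h3 := Hm i2 i3 i3 erefl erefl. have h4 := A2 i3 i2 i3 i0. lra.
- have h0 := Hm i2 i3 i1 erefl erefl. lra.
- have h0 := A2 i2 i3 i1 i1. lra.
- have h0 := B i3 i1 i0 i0. have h1 := A1 i3 i2 i1 i2. have h2 := B i3 i2 i2 i1. have h3 := A3 i2 i3 i2 i1. have h4 := Htr i1 i3. have h5 := Hm i3 i1 i0 erefl erefl. have h6 := A1 i3 i2 i2 i1. have h7 := A3 i3 i0 i1 i0. have h8 := A2 i3 i1 i2 i2. have h9 := A1 i1 i0 i0 i3. have h10 := B i3 i3 i3 i1. have h11 := A1 i1 i1 i1 i3. have h12 := A2 i3 i3 i3 i1. have h13 := A2 i1 i0 i3 i0. lra.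
- have h0 := B i2 i1 i0 i0. have h1 := A1 i3 i2 i1 i3. have h2 := A3 i2 i0 i1 i0. have h3 := Hm i2 i1 i0 erefl erefl. have h4 := B i3 i3 i2 i1. have h5 := Htr i1 i2. have h6 := A2 i1 i0 i2 i0. have h7 := A2 i3 i3 i2 i1. have h8 := A2 i2 i2 i2 i1. have h9 := B i2 i2 i2 i1. have h10 := A2 i1 i2 i3 i3. have h11 := A3 i3 i3 i1 i2. have h12 := A2 i1 i2 i1 i1. have h13 := A3 i1 i2 i1 i1. have h14 := A1 i1 i0 i0 i2. lra.
- have h0 := B i3 i0 i0 i0. have h1 := Hm i2 i3 i2 erefl erefl. lra.
- have h0 := Htr i3 i1. have h1 := B i3 i1 i0 i0. have h2 := A2 i1 i3 i1 i1. have h3 := A2 i0 i3 i1 i0. have h4 := A2 i3 i3 i3 i1. have h5 := A3 i3 i3 i3 i1. have h6 := B i3 i3 i3 i1. have h7 := Hm i3 i1 i0 erefl erefl. have h8 := A1 i3 i0 i1 i0. lra.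
- have h0 := A2 i2 i3 i2 i2. lra.
- have h0 := A1 i3 i2 i2 i3. have h1 := Htr i3 i3. have h2 := B i2 i2 i0 i0. have h3 := B i3 i3 i0 i0. have h4 := A1 i2 i0 i2 i0. have h5 := Htr i0 i0. have h6 := B i0 i3 i3 i0. have h7 := A1 i3 i0 i3 i0. have h8 := B i3 i3 i3 i3. have h9 := B i0 i2 i2 i0. have h10 := Htr i2 i2. have h11 := A1 i3 i1 i1 i3. have h12 := B i3 i3 i2 i2. have h13 := Hm i3 i3 i0 erefl erefl. have h14 := Hm i2 i2 i0 erefl erefl. have h15 := B i2 i2 i2 i2. have h16 := A2 i0 i0 i2 i2. have h17 := A1 i2 i1 i1 i2. have h18 := B i1 i1 i0 i0. have h19 := A2 i0 i0 i3 i3. have h20 := B i3 i3 i1 i1. have h21 := B i0 i0 i0 i0. have h22 := A2 i3 i3 i2 i2. have h23 := B i2 i2 i1 i1. have h24 := Htr i1 i1. have h25 := Hm i1 i1 i0 erefl erefl. have h26 := A3 i1 i0 i0 i1. have h27 := A2 i3 i3 i1 i1. have h28 := B i0 i1 i1 i0. have h29 := A2 i0 i0 i1 i1. have h30 := A2 i2 i2 i1 i1. have h31 := B i1 i1 i1 i1. lra.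
- have h0 := B i2 i0 i0 i0. have h1 := Hm i2 i3 i3 erefl erefl. lra.
- have h0 := B i2 i1 i0 i0. have h1 := A1 i3 i2 i3 i1. have h2 := B i3 i3 i1 i2. have h3 := A3 i2 i0 i1 i0. have h4 := Hm i2 i1 i0 erefl erefl. have h5 := A2 i3 i1 i3 i2. have h6 := Htr i1 i2. have h7 := A2 i1 i0 i2 i0. have h8 := A2 i2 i2 i2 i1. have h9 := B i2 i2 i2 i1. have h10 := A1 i3 i3 i1 i2. have h11 := A2 i1 i2 i1 i1. have h12 := A3 i1 i2 i1 i1. have h13 := A1 i1 i0 i0 i2. lra.
- have h0 := B i2 i2 i0 i0. have h1 := A1 i3 i2 i3 i2. have h2 := B i3 i3 i0 i0. have h3 := A1 i2 i0 i2 i0. have h4 := Htr i0 i0. have h5 := A1 i3 i0 i3 i0. have h6 := A1 i3 i2 i2 i3. have h7 := Htr i3 i3. have h8 := B i3 i3 i2 i2. have h9 := Htr i2 i2. have h10 := B i0 i3 i3 i0. have h11 := B i0 i2 i2 i0. have h12 := Hm i3 i3 i0 erefl erefl. have h13 := Hm i2 i2 i0 erefl erefl. have h14 := B i2 i2 i2 i2. have h15 := A2 i0 i0 i2 i2. have h16 := A1 i2 i1 i1 i2. have h17 := B i1 i1 i0 i0. have h18 := A2 i0 i0 i3 i3. have h19 := B i3 i3 i3 i3. have h20 := B i0 i0 i0 i0. have h21 := A2 i3 i3 i2 i2. have h22 := A1 i3 i1 i1 i3. have h23 := Hm i1 i1 i0 erefl erefl. have h24 := A3 i1 i0 i0 i1.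 have h25 := B i2 i2 i1 i1. have h26 := B i0 i1 i1 i0. have h27 := B i3 i3 i1 i1. have h28 := Htr i1 i1. have h29 := A2 i0 i0 i1 i1. have h30 := A2 i2 i2 i1 i1. have h31 := A2 i3 i3 i1 i1. have h32 := B i1 i1 i1 i1. lra.
- have h0 := B i2 i3 i3 i3. lra.
- have h0 := B i3 i0 i0 i0. lra.
- lra.
- lra.
- have h0 := B i0 i0 i0 i0. lra.
- have h0 := A2 i3 i0 i1 i0. lra.
- have h0 := A2 i3 i0 i1 i1. lra.
- have h0 := B i3 i2 i0 i1. have h1 := A1 i2 i1 i3 i0. have h2 := Hm i1 i2 i3 erefl erefl. have h3 := A3 i3 i0 i2 i1. have h4 := B i3 i2 i1 i0. have h5 := A2 i3 i2 i1 i0. have h6 := A2 i3 i1 i2 i0. lra.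
- have h0 := B i3 i3 i0 i1. have h1 := Htr i0 i1. have h2 := A3 i1 i1 i1 i0. have h3 := A1 i1 i0 i0 i0. have h4 := Htr i1 i0. have h5 := B i3 i3 i1 i0. have h6 := A1 i3 i3 i0 i1. have h7 := A2 i3 i3 i1 i0. have h8 := A2 i3 i1 i3 i0. have h9 := Hm i3 i1 i3 erefl erefl. have h10 := A3 i2 i1 i2 i0. have h11 := A1 i0 i0 i1 i0. have h12 := A3 i1 i0 i0 i0. lra.
- have h0 := A2 i3 i0 i2 i0. lra.
- have h0 := B i3 i2 i1 i0. have h1 := A3 i3 i0 i1 i2. have h2 := B i3 i2 i0 i1. have h3 := A2 i3 i2 i1 i0. have h4 := A1 i2 i1 i3 i0. have h5 := Hm i2 i1 i3 erefl erefl. have h6 := A2 i3 i1 i2 i0. lra.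
- have h0 := A2 i3 i0 i2 i2. lra.
- have h0 := Htr i0 i2. have h1 := B i3 i3 i0 i2. have h2 := A3 i3 i2 i3 i0. have h3 := Htr i2 i0. have h4 := Hm i3 i2 i3 erefl erefl. have h5 := A3 i3 i3 i0 i2. have h6 := A3 i2 i2 i2 i0. have h7 := A2 i0 i2 i0 i0. have h8 := A2 i0 i3 i3 i2. have h9 := B i0 i3 i3 i2. have h10 := A3 i1 i2 i1 i0. lra.
- have h0 := A2 i3 i0 i3 i0. have h1 := B i0 i0 i0 i0. lra.
- have h0 := Htr i0 i1. have h1 := B i0 i1 i0 i0. have h2 := A3 i1 i1 i1 i0. have h3 := A1 i1 i0 i0 i0. have h4 := Htr i1 i0. have h5 := Hm i3 i1 i3 erefl erefl. have h6 := A3 i2 i1 i2 i0. have h7 := A1 i0 i0 i1 i0. have h8 := A3 i1 i0 i0 i0. lra.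
- have h0 := Htr i0 i2. have h1 := B i3 i3 i2 i0. have h2 := B i3 i3 i0 i2. have h3 := Htr i2 i0. have h4 := Hm i3 i2 i3 erefl erefl. have h5 := A2 i3 i3 i2 i0. have h6 := Hm i3 i3 i2 erefl erefl. have h7 := A1 i3 i0 i2 i3. have h8 := A3 i2 i2 i2 i0. have h9 := A3 i3 i2 i0 i3. have h10 := A2 i0 i2 i0 i0. have h11 := A3 i1 i2 i1 i0. have h12 := A2 i0 i3 i3 i2. lra.
- have h0 := A2 i3 i0 i3 i3. lra.
- have h0 := Hm i3 i1 i0 erefl erefl. lra.
- have h0 := B i3 i1 i1 i0. have h1 := B i3 i0 i0 i0. have h2 := Hm i3 i1 i1 erefl erefl. have h3 := A2 i3 i0 i1 i1. lra.
- have h0 := B i3 i2 i1 i0. have h1 := A2 i3 i0 i2 i1. have h2 := A2 i3 i2 i1 i0. have h3 := B i3 i2 i0 i1. have h4 := Hm i3 i1 i2 erefl erefl. lra.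
- have h0 := B i3 i3 i1 i0. have h1 := B i1 i0 i0 i0. have h2 := A3 i3 i1 i3 i0. have h3 := Hm i3 i1 i3 erefl erefl. have h4 := Hm i3 i3 i1 erefl erefl. lra.
- have h0 := B i3 i0 i0 i0. have h1 := Hm i3 i1 i1 erefl erefl. lra.
- have h0 := B i3 i1 i1 i1. lra.
- have h0 := B i3 i2 i0 i0. have h1 := B i3 i2 i1 i1. have h2 := A3 i3 i0 i2 i0. have h3 := A3 i3 i1 i2 i1. have h4 := A3 i3 i2 i1 i1. have h5 := Hm i3 i2 i0 erefl erefl. have h6 := A2 i3 i3 i3 i2. have h7 := B i3 i3 i3 i2. have h8 := B i2 i3 i0 i0. have h9 := Hm i2 i3 i0 erefl erefl. have h10 := A2 i2 i3 i2 i2. have h11 := A3 i2 i3 i2 i2. have h12 := A2 i1 i1 i3 i2. have h13 := B i2 i3 i1 i1. have h14 := A3 i2 i3 i1 i1. have h15 := A2 i2 i3 i1 i1. have h16 := A1 i2 i1 i1 i3. have h17 := Htr i2 i3. have h18 := A1 i2 i0 i0 i3. lra.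
- have h0 := B i3 i3 i1 i1. have h1 := B i3 i3 i0 i0. have h2 := B i1 i1 i0 i0. have h3 := B i1 i3 i3 i1. have h4 := A1 i3 i1 i3 i1. have h5 := A1 i3 i0 i3 i0. have h6 := Htr i0 i0. have h7 := B i0 i1 i1 i0. have h8 := A1 i1 i0 i1 i0. have h9 := Hm i1 i1 i0 erefl erefl. have h10 := Htr i1 i1. have h11 := B i0 i3 i3 i0. have h12 := Htr i3 i3. have h13 := A3 i3 i3 i1 i1. have h14 := Hm i3 i3 i0 erefl erefl. have h15 := B i2 i2 i0 i0. have h16 := B i2 i2 i1 i1. have h17 := B i3 i3 i3 i3. have h18 := A1 i3 i2 i2 i3. have h19 := A2 i1 i1 i3 i3. have h20 := B i0 i0 i0 i0. have h21 := A2 i0 i0 i1 i1. have h22 := B i1 i1 i1 i1. have h23 := A2 i0 i0 i3 i3. have h24 := A3 i2 i2 i1 i1. have h25 := A1 i2 i0 i0 i2. have h26 := A3 i2 i1 i1 i2. have h27 := B i1 i2 i2 i1. have h28 := B i3 i3 i2 i2. have h29 := Hm i2 i2 i0 erefl erefl. have h30 := Htr i2 i2. have h31 := A2 i3 i3 i2 i2. have h32 := B i2 i2 i2 i2. lra.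
- have h0 := Hm i3 i1 i2 erefl erefl. lra.
- have h0 := B i3 i2 i0 i0. have h1 := B i3 i2 i1 i1. have h2 := A3 i3 i0 i2 i0. have h3 := A3 i3 i2 i1 i1. have h4 := A3 i3 i1 i1 i2. have h5 := Hm i3 i2 i0 erefl erefl. have h6 := A2 i3 i3 i3 i2. have h7 := B i3 i3 i3 i2. have h8 := B i2 i3 i0 i0. have h9 := Hm i2 i3 i0 erefl erefl. have h10 := A2 i2 i3 i2 i2. have h11 := A3 i2 i3 i2 i2. have h12 := A2 i1 i1 i3 i2. have h13 := A2 i1 i2 i3 i1. have h14 := Htr i2 i3. have h15 := A2 i2 i3 i1 i1. have h16 := A3 i2 i3 i1 i1. have h17 := A1 i2 i0 i0 i3. lra.
- have h0 := A2 i3 i1 i2 i2. lra.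
- have h0 := B i3 i3 i1 i2. have h1 := B i1 i2 i0 i0. have h2 := A2 i3 i3 i2 i1. have h3 := Hm i1 i2 i0 erefl erefl. have h4 := A3 i2 i0 i1 i0. have h5 := Htr i2 i1. have h6 := A1 i2 i0 i0 i1. have h7 := A3 i3 i3 i2 i1. have h8 := A1 i2 i2 i2 i1. have h9 := B i2 i1 i0 i0. have h10 := Hm i2 i1 i0 erefl erefl. have h11 := A2 i1 i2 i1 i1. have h12 := A2 i2 i1 i3 i3. lra.
- have h0 := Hm i3 i1 i3 erefl erefl. have h1 := B i1 i0 i0 i0. lra.
- have h0 := B i1 i1 i0 i0. have h1 := B i3 i3 i1 i1. have h2 := Htr i1 i1. have h3 := B i3 i3 i0 i0. have h4 := Hm i1 i1 i0 erefl erefl. have h5 := B i0 i3 i3 i0. have h6 := Htr i3 i3. have h7 := B i2 i2 i1 i1. have h8 := A1 i1 i0 i1 i0. have h9 := Htr i0 i0. have h10 := A1 i3 i0 i3 i0. have h11 := A3 i3 i3 i1 i1. have h12 := B i0 i1 i1 i0. have h13 := A1 i3 i1 i1 i3. have h14 := B i1 i1 i1 i1. have h15 := Hm i3 i3 i0 erefl erefl. have h16 := B i2 i2 i0 i0. have h17 := A3 i2 i2 i1 i1. have h18 := B i3 i3 i3 i3. have h19 := A3 i2 i1 i1 i2. have h20 := A1 i3 i2 i2 i3. have h21 := A2 i1 i1 i3 i3. have h22 := B i1 i2 i2 i1. have h23 := B i0 i0 i0 i0. have h24 := A2 i0 i0 i1 i1. have h25 := A2 i0 i0 i3 i3. have h26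 := Htr i2 i2. have h27 := Hm i2 i2 i0 erefl erefl. have h28 := A3 i2 i0 i0 i2. have h29 := B i3 i3 i2 i2. have h30 := B i0 i2 i2 i0. have h31 := B i2 i2 i2 i2. have h32 := A2 i0 i0 i2 i2. have h33 := A2 i3 i3 i2 i2. lra.
- have h0 := B i1 i2 i0 i0. have h1 := Htr i1 i2. have h2 := A2 i2 i1 i2 i2. have h3 := A2 i1 i1 i2 i1. have h4 := A3 i1 i2 i1 i1. have h5 := B i1 i2 i1 i1. have h6 := Hm i1 i2 i0 erefl erefl. have h7 := A3 i2 i0 i1 i0. have h8 := A2 i0 i2 i1 i0. have h9 := A1 i2 i0 i1 i0. have h10 := A3 i0 i2 i0 i1. lra.
- have h0 := A2 i3 i1 i3 i3. lra.
- have h0 := Hm i3 i2 i0 erefl erefl. lra.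
- have h0 := A2 i3 i2 i1 i0. have h1 := Hm i3 i2 i1 erefl erefl. lra.
- have h0 := B i3 i0 i0 i0. have h1 := B i3 i2 i2 i0. have h2 := A2 i3 i0 i2 i2. have h3 := Hm i3 i2 i2 erefl erefl. lra.
- have h0 := B i2 i0 i0 i0. have h1 := B i3 i3 i2 i0. have h2 := Hm i3 i3 i2 erefl erefl. have h3 := A3 i3 i2 i3 i0. have h4 := Hm i3 i2 i3 erefl erefl. lra.
- have h0 := Hm i3 i2 i1 erefl erefl. lra.
- have h0 := A2 i3 i2 i1 i1. lra.
- have h0 := B i3 i2 i2 i1. have h1 := B i3 i1 i0 i0. have h2 := A3 i3 i1 i2 i2. have h3 := A3 i3 i2 i2 i1. have h4 := Hm i3 i1 i0 erefl erefl. have h5 := A3 i3 i0 i1 i0. have h6 := A2 i1 i3 i1 i1. have h7 := A3 i1 i3 i1 i1. have h8 := A1 i1 i0 i0 i3. have h9 := Htr i1 i3. have h10 := A2 i2 i2 i3 i1. have h11 := A2 i2 i1 i3 i2. have h12 := B i2 i3 i2 i1. have h13 := A2 i3 i3 i3 i1. have h14 := B i3 i3 i3 i1. have h15 := A3 i2 i3 i2 i1. have h16 := A2 i1 i0 i3 i0. lra.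
- have h0 := B i3 i3 i2 i1. have h1 := B i2 i1 i0 i0. have h2 := Htr i1 i2. have h3 := A3 i3 i3 i2 i1. have h4 := A3 i2 i0 i1 i0. have h5 := Hm i2 i1 i0 erefl erefl. have h6 := A3 i1 i2 i1 i1. have h7 := A2 i1 i0 i2 i0. have h8 := B i2 i2 i2 i1. have h9 := A2 i2 i2 i2 i1. have h10 := A2 i1 i2 i1 i1. have h11 := A1 i1 i0 i0 i2. have h12 := A2 i2 i1 i3 i3. lra.
- have h0 := Hm i3 i2 i2 erefl erefl. have h1 := B i3 i0 i0 i0. lra.
- have h0 := B i3 i2 i2 i1. have h1 := B i3 i1 i0 i0. have h2 := A3 i3 i1 i2 i2. have h3 := A3 i3 i2 i1 i2. have h4 := Hm i3 i1 i0 erefl erefl. have h5 := A3 i3 i0 i1 i0. have h6 := A2 i1 i3 i1 i1. have h7 := A3 i1 i3 i1 i1. have h8 := B i1 i3 i2 i2. have h9 := A1 i1 i0 i0 i3. have h10 := Htr i1 i3. have h11 := B i2 i3 i1 i2. have h12 := A3 i2 i2 i1 i3. have h13 := A2 i3 i3 i3 i1. have h14 := B i3 i3 i3 i1. have h15 := A3 i2 i3 i1 i2. have h16 := A1 i2 i1 i2 i3. have h17 := A1 i2 i2 i1 i3. have h18 := A2 i1 i0 i3 i0. lra.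
- have h0 := B i3 i2 i2 i2. lra.
- have h0 := B i2 i2 i0 i0. have h1 := B i3 i3 i2 i2. have h2 := B i3 i3 i0 i0. have h3 := A1 i2 i0 i2 i0. have h4 := Htr i0 i0. have h5 := A1 i3 i0 i3 i0. have h6 := B i2 i3 i3 i2. have h7 := Htr i3 i3. have h8 := A1 i3 i2 i3 i2. have h9 := Htr i2 i2. have h10 := A3 i3 i3 i2 i2. have h11 := B i0 i3 i3 i0. have h12 := B i0 i2 i2 i0. have h13 := Hm i3 i3 i0 erefl erefl. have h14 := Hm i2 i2 i0 erefl erefl. have h15 := B i2 i2 i2 i2. have h16 := A2 i2 i2 i3 i3. have h17 := A2 i0 i0 i2 i2. have h18 := A1 i2 i1 i1 i2. have h19 := B i1 i1 i0 i0. have h20 := A2 i0 i0 i3 i3. have h21 := B i3 i3 i3 i3. have h22 := B i0 i0 i0 i0. have h23 := A1 i3 i1 i1 i3. have h24 := Hm i1 i1 i0 erefl erefl. have h25 := A3 i1 i0 i0 i1. have h26 := B i2 i2 i1 i1. have h27 := B i0 i1 i1 i0. have h28 := B i3 i3 i1 i1. have h29 := Htr i1 i1. have h30 := A2 i0 i0 i1 i1. have h31 := A2 i2 i2 i1 i1. have h32 := A2 i3 i3 i1 i1. have h33 := B i1 i1 i1 i1. lra.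
- have h0 := B i2 i0 i0 i0. have h1 := Hm i3 i2 i3 erefl erefl. lra.
- have h0 := B i2 i1 i0 i0. have h1 := Htr i2 i1. have h2 := A2 i0 i2 i1 i0. have h3 := A2 i2 i2 i2 i1. have h4 := A3 i2 i2 i2 i1. have h5 := B i2 i2 i2 i1. have h6 := A1 i2 i0 i1 i0. have h7 := Hm i2 i1 i0 erefl erefl. have h8 := A2 i1 i2 i1 i1. lra.
- have h0 := B i2 i2 i0 i0. have h1 := B i3 i3 i2 i2. have h2 := Htr i2 i2. have h3 := B i3 i3 i0 i0. have h4 := B i2 i2 i2 i2. have h5 := A1 i2 i0 i2 i0. have h6 := Htr i0 i0. have h7 := B i0 i3 i3 i0. have h8 := Htr i3 i3. have h9 := A1 i2 i1 i1 i2. have h10 := A1 i3 i0 i3 i0. have h11 := B i0 i2 i2 i0. have h12 := A3 i3 i3 i2 i2. have h13 := A1 i3 i2 i2 i3. have h14 := Hm i3 i3 i0 erefl erefl. have h15 := Hm i2 i2 i0 erefl erefl. have h16 := A2 i2 i2 i3 i3. have h17 := A2 i0 i0 i2 i2. have h18 := B i1 i1 i0 i0. have h19 := A2 i0 i0 i3 i3. have h20 := B i3 i3 i3 i3. have h21 := B i2 i2 i1 i1. have h22 := B i0 i0 i0 i0. have h23 := A1 i3 i1 i1 i3. have h24 := Htr i1 i1. have h25 := Hm i1 i1 i0 erefl erefl. have h26 := A3 i1 i0 i0 i1. have h27 := A2 i2 i2 i1 i1. have h28 := B i0 i1 i1 i0. have h29 := B i3 i3 i1 i1. have h30 := A2 i0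 i0 i1 i1. have h31 := A2 i3 i3 i1 i1. have h32 := B i1 i1 i1 i1. lra.
- have h0 := A2 i3 i2 i3 i3. lra.
- have h0 := Hm i3 i3 i0 erefl erefl. lra.
- have h0 := A1 i3 i3 i0 i1. lra.
- have h0 := A1 i3 i3 i0 i2. lra.
- have h0 := A1 i3 i3 i0 i3. lra.
- have h0 := Hm i3 i3 i1 erefl erefl. lra.
- have h0 := A2 i3 i3 i1 i1. lra.
- have h0 := A1 i3 i3 i1 i2. lra.
- have h0 := A1 i3 i3 i1 i3. lra.
- have h0 := Hm i3 i3 i2 erefl erefl. lra.
- have h0 := A1 i3 i3 i2 i1. lra.
- have h0 := A2 i3 i3 i2 i2. lra.
- have h0 := A1 i3 i3 i2 i3. lra.
- have h0 := Hm i3 i3 i3 erefl erefl. lra.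
- have h0 := A2 i3 i3 i3 i1. have h1 := A3 i3 i3 i3 i1. have h2 := B i3 i3 i3 i1. lra.
- have h0 := A2 i3 i3 i3 i2. have h1 := A3 i3 i3 i3 i2. have h2 := B i3 i3 i3 i2. lra.
- have h0 := B i3 i3 i3 i3. lra.
Qed.



Definition S4 {R : realType} (F : idx -> idx -> idx -> idx -> R) : R :=
  \sum_(a < 4) \sum_(b < 4) \sum_(c < 4) \sum_(d < 4) F a b c d.

Lemma S4_tuple {R : realType} (F : idx -> idx -> idx -> idx -> R) :
  S4 F = \sum_(x : idx * (idx * (idx * idx))) F x.1 x.2.1 x.2.2.1 x.2.2.2.
Proof.
rewrite /S4.
under eq_bigr => a _ do under eq_bigr => b _ do rewrite pair_bigA.
under eq_bigr => a _ do rewrite pair_bigA.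
by rewrite pair_bigA.
Qed.

Lemma S4_ext {R : realType} (F G : idx -> idx -> idx -> idx -> R) :
  (forall a b c d, F a b c d = G a b c d) -> S4 F = S4 G.
Proof.
move=> H; rewrite /S4; apply: eq_bigr => a _; apply: eq_bigr => b _;
apply: eq_bigr => c _; apply: eq_bigr => d _; exact: H.
Qed.

Lemma S4_exch {R : realType} (F : idx -> idx -> idx -> idx -> idx -> idx -> idx -> idx -> R) :
  S4 (fun a b c d => S4 (fun i j k l => F a b c d i j k l))
  = S4 (fun i j k l => S4 (fun a b c d => F a b c d i j k l)).
Proof.
rewrite S4_tuple; under eq_bigr => x _ do rewrite S4_tuple.
rewrite exchange_big /= S4_tuple; apply: eq_bigr => y _.
by rewrite S4_tuple.
Qed.

Lemma S4_mull {R : realType} (x : R) F :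
  x * S4 F = S4 (fun a b c d => x * F a b c d).
Proof. by rewrite !S4_tuple mulr_sumr. Qed.

Lemma S4_mulr {R : realType} (x : R) F :
  S4 F * x = S4 (fun a b c d => F a b c d * x).
Proof. by rewrite !S4_tuple mulr_suml. Qed.

Lemma S4_prod {R : realType} (f g h k : idx -> R) :
  (\sum_a f a) * (\sum_b g b) * (\sum_c h c) * (\sum_d k d)
  = S4 (fun a b c d => f a * g b * h c * k d).
Proof.
rewrite /S4; symmetry.
under eq_bigr => a _ do under eq_bigr => b _ do under eq_bigr => c _ do rewrite -mulr_sumr.
under eq_bigr => a _ do under eq_bigr => b _ do rewrite -mulr_suml -mulr_sumr.
under eq_bigr => a _ do rewrite -mulr_suml -mulr_suml -mulr_sumr.
by rewrite -!mulr_suml.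
Qed.

Definition pb4 {R : realType} (Q : 'M[R]_4) (X : tensor4 R) : tensor4 R :=
  fun i j k l => S4 (fun a b c d => Q a i * Q b j * Q c k * Q d l * X a b c d).

Lemma rearr8 {R : realType} (m1 m2 m3 m4 n1 n2 n3 n4 x : R) :
  m1 * m2 * m3 * m4 * (n1 * n2 * n3 * n4 * x)
  = n1 * m1 * (n2 * m2) * (n3 * m3) * (n4 * m4) * x.
Proof. ring. Qed.

Lemma pb4_comp {R : realType} (M N : 'M[R]_4) X i j k l :
  pb4 M (pb4 N X) i j k l = pb4 (N *m M) X i j k l.
Proof.
rewrite /pb4.
transitivity (S4 (fun a b c d => S4 (fun p q r s =>
   N p a * M a i * (N q b * M b j) * (N r c * M c k) * (N s d * M d l) * X p q r s))).
  apply: S4_ext => a b c d; rewrite S4_mull; apply: S4_ext => p q r s.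
  exact: rearr8.
rewrite S4_exch; apply: S4_ext => p q r s.
rewrite -S4_mulr -S4_prod !mxE.
done.
Qed.

Lemma sum_one {R : realType} (c : 'I_4) (F : 'I_4 -> R) :
  (forall r, r != c -> F r = 0) -> \sum_(r < 4) F r = F c.
Proof.
move=> H; rewrite (bigD1 c) //= big1 ?addr0 // => r /H //.
Qed.

Lemma pb4_1 {R : realType} (X : tensor4 R) i j k l : pb4 1%:M X i j k l = X i j k l.
Proof.
rewrite /pb4 /S4.
rewrite (@sum_one _ i); last first.
  move=> a Ha; apply: big1 => b _; apply: big1 => c _; apply: big1 => d _.
  by rewrite [1%:M a i]mxE (negbTE Ha) !mul0r.
rewrite (@sum_one _ j); last first.
  move=> b Hb; apply: big1 => c _; apply: big1 => d _.
  by rewrite [1%:M b j]mxE (negbTE Hb) !(mulr0, mul0r).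
rewrite (@sum_one _ k); last first.
  move=> c Hc; apply: big1 => d _.
  by rewrite [1%:M c k]mxE (negbTE Hc) !(mulr0, mul0r).
rewrite (@sum_one _ l); last first.
  move=> d Hd.
  by rewrite [1%:M d l]mxE (negbTE Hd) !(mulr0, mul0r).
by rewrite !mxE !eqxx !mul1r.
Qed.

Definition tup := (idx * (idx * (idx * idx)))%type.

Lemma S4_reindex {R : realType} (F : idx -> idx -> idx -> idx -> R)
  (h : tup -> tup) : injective h ->
  S4 F = \sum_(x : tup) F (h x).1 (h x).2.1 (h x).2.2.1 (h x).2.2.2.
Proof. by move=> hi; rewrite S4_tuple (reindex_inj hi). Qed.

Lemma S4_p2134 {R : realType} F :
  S4 F = S4 (fun a b c d => F b a c d :> R).
Proof.
rewrite (@S4_reindex _ _ (fun x => (x.2.1, (x.1, x.2.2)))) ?S4_tuple //.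
by move=> [a [b [c d]]] [a' [b' [c' d']]] /= [] -> -> -> ->.
Qed.

Lemma S4_p1243 {R : realType} F :
  S4 F = S4 (fun a b c d => F a b d c :> R).
Proof.
rewrite (@S4_reindex _ _ (fun x => (x.1, (x.2.1, (x.2.2.2, x.2.2.1))))) ?S4_tuple //.
by move=> [a [b [c d]]] [a' [b' [c' d']]] /= [] -> -> -> ->.
Qed.

Lemma S4_p3412 {R : realType} F :
  S4 F = S4 (fun a b c d => F c d a b :> R).
Proof.
rewrite (@S4_reindex _ _ (fun x => (x.2.2.1, (x.2.2.2, (x.1, x.2.1))))) ?S4_tuple //.
by move=> [a [b [c d]]] [a' [b' [c' d']]] /= [] -> -> -> ->.
Qed.

Lemma S4_p1342 {R : realType} F :
  S4 F = S4 (fun a b c d => F a c d b :> R).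
Proof.
rewrite (@S4_reindex _ _ (fun x => (x.1, (x.2.2.1, (x.2.2.2, x.2.1))))) ?S4_tuple //.
by move=> [a [b [c d]]] [a' [b' [c' d']]] /= [] -> -> -> ->.
Qed.

Lemma S4_p1423 {R : realType} F :
  S4 F = S4 (fun a b c d => F a d b c :> R).
Proof.
rewrite (@S4_reindex _ _ (fun x => (x.1, (x.2.2.2, (x.2.1, x.2.2.1))))) ?S4_tuple //.
by move=> [a [b [c d]]] [a' [b' [c' d']]] /= [] -> -> -> ->.
Qed.

Lemma S4_opp {R : realType} (F : idx -> idx -> idx -> idx -> R) :
  - S4 F = S4 (fun a b c d => - F a b c d).
Proof. by rewrite !S4_tuple sumrN. Qed.

Lemma S4_add {R : realType} (F G : idx -> idx -> idx -> idx -> R) :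
  S4 F + S4 G = S4 (fun a b c d => F a b c d + G a b c d).
Proof. by rewrite !S4_tuple -big_split. Qed.

Lemma S4_0 {R : realType} : S4 (fun _ _ _ _ => 0 : R) = 0.
Proof. by rewrite S4_tuple big1. Qed.

Lemma pb4_A1 {R : realType} Q (X : tensor4 R) :
  (forall a b c d, X a b c d = - X b a c d) ->
  forall i j k l, pb4 Q X i j k l = - pb4 Q X j i k l.
Proof.
move=> H i j k l; rewrite /pb4 S4_opp [in RHS]S4_p2134; apply: S4_ext => a b c d.
rewrite H; ring.
Qed.

Lemma pb4_A2 {R : realType} Q (X : tensor4 R) :
  (forall a b c d, X a b c d = - X a b d c) ->
  forall i j k l, pb4 Q X i j k l = - pb4 Q X i j l k.
Proof.
move=> H i j k l; rewrite /pb4 S4_opp [in RHS]S4_p1243; apply: S4_ext => a b c d.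
rewrite H; ring.
Qed.

Lemma pb4_A3 {R : realType} Q (X : tensor4 R) :
  (forall a b c d, X a b c d = X c d a b) ->
  forall i j k l, pb4 Q X i j k l = pb4 Q X k l i j.
Proof.
move=> H i j k l; rewrite /pb4 [in RHS]S4_p3412; apply: S4_ext => a b c d.
rewrite H; ring.
Qed.

Lemma pb4_B {R : realType} Q (X : tensor4 R) :
  (forall a b c d, X a b c d + X a c d b + X a d b c = 0) ->
  forall i j k l, pb4 Q X i j k l + pb4 Q X i k l j + pb4 Q X i l j k = 0.
Proof.
move=> H i j k l; rewrite /pb4 [S4 (fun a b c d => _ * Q b k * _ * _ * _)]S4_p1342.
rewrite [S4 (fun a b c d => _ * Q b l * _ * _ * _)]S4_p1423 !S4_add -[RHS]S4_0.
apply: S4_ext => a b c d.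
have := H a b c d; move=> H'.
transitivity (Q a i * Q b j * Q c k * Q d l * (X a b c d + X a c d b + X a d b c)).
  ring.
by rewrite H' mulr0.
Qed.

Lemma S4_p3142 {R : realType} F :
  S4 F = S4 (fun a b c d => F c a d b :> R).
Proof.
rewrite (@S4_reindex _ _ (fun x => (x.2.2.1, (x.1, (x.2.2.2, x.2.1))))) ?S4_tuple //.
by move=> [a [b [c d]]] [a' [b' [c' d']]] /= [] -> -> -> ->.
Qed.

Lemma S4_p2314 {R : realType} F :
  S4 F = S4 (fun a b c d => F b c a d :> R).
Proof.
rewrite (@S4_reindex _ _ (fun x => (x.2.1, (x.2.2.1, (x.1, x.2.2.2))))) ?S4_tuple //.
by move=> [a [b [c d]]] [a' [b' [c' d']]] /= [] -> -> -> ->.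
Qed.

Lemma S4_p3124 {R : realType} F :
  S4 F = S4 (fun a b c d => F c a b d :> R).
Proof.
rewrite (@S4_reindex _ _ (fun x => (x.2.2.1, (x.1, (x.2.1, x.2.2.2))))) ?S4_tuple //.
by move=> [a [b [c d]]] [a' [b' [c' d']]] /= [] -> -> -> ->.
Qed.

Lemma S4_p1324 {R : realType} F :
  S4 F = S4 (fun a b c d => F a c b d :> R).
Proof.
rewrite (@S4_reindex _ _ (fun x => (x.1, (x.2.2.1, (x.2.1, x.2.2.2))))) ?S4_tuple //.
by move=> [a [b [c d]]] [a' [b' [c' d']]] /= [] -> -> -> ->.
Qed.

Lemma sum_S4 {R : realType} (G : idx -> idx -> idx -> idx -> idx -> R) :
  \sum_(m < 4) S4 (G m) = S4 (fun a b c d => \sum_(m < 4) G m a b c d).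
Proof.
under eq_bigr => m _ do rewrite S4_tuple.
rewrite exchange_big /= S4_tuple //.
Qed.

Lemma sum2_S4 {R : realType} (G : idx -> idx -> idx -> idx -> idx -> idx -> R) :
  \sum_(m < 4) \sum_(n < 4) S4 (G m n)
  = S4 (fun a b c d => \sum_(m < 4) \sum_(n < 4) G m n a b c d).
Proof.
under eq_bigr => m _ do rewrite sum_S4.
by rewrite sum_S4.
Qed.

Definition S3 {R : realType} (F : idx -> idx -> idx -> R) : R :=
  \sum_(a < 4) \sum_(b < 4) \sum_(c < 4) F a b c.

Lemma prod13 {R : realType} (f : idx -> R) G :
  (\sum_(a < 4) f a) * S3 G = S4 (fun a b c d => f a * G b c d).
Proof.
rewrite mulr_suml /S4 /S3; apply: eq_bigr => a _.
rewrite mulr_sumr; apply: eq_bigr => b _.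
rewrite mulr_sumr; apply: eq_bigr => c _.
by rewrite mulr_sumr.
Qed.

Lemma prod22 {R : realType} (f g : idx -> idx -> R) :
  (\sum_(a < 4) \sum_(b < 4) f a b) * (\sum_(c < 4) \sum_(d < 4) g c d)
  = S4 (fun a b c d => f a b * g c d).
Proof.
rewrite mulr_suml /S4; apply: eq_bigr => a _.
rewrite mulr_suml; apply: eq_bigr => b _.
rewrite mulr_sumr; apply: eq_bigr => c _.
by rewrite mulr_sumr.
Qed.

Definition pb2 {R : realType} (Q : 'M[R]_4) (M : idx -> idx -> R) : idx -> idx -> R :=
  fun i j => \sum_(a < 4) \sum_(b < 4) Q a i * Q b j * M a b.
Definition pb1 {R : realType} (Q : 'M[R]_4) (v : idx -> R) : idx -> R :=
  fun i => \sum_(a < 4) Q a i * v a.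
Definition mv {R : realType} (P : 'M[R]_4) (v : idx -> R) : idx -> R :=
  fun i => \sum_(a < 4) P i a * v a.

Lemma QPv {R : realType} (Q P : 'M[R]_4) (u : idx -> R) y :
  Q *m P = 1%:M -> \sum_(m < 4) Q y m * mv P u m = u y.
Proof.
move=> QP.
rewrite /mv.
under eq_bigr => m _ do rewrite mulr_sumr.
rewrite exchange_big /=.
transitivity (\sum_(z < 4) (Q *m P) y z * u z).
  by apply: eq_bigr => z _; rewrite mxE mulr_suml; apply: eq_bigr => m _; rewrite mulrA.
rewrite QP (@sum_one _ y) ?mxE ?eqxx ?mul1r // => z Hz.
by rewrite mxE eq_sym (negbTE Hz) mul0r.
Qed.

Lemma lower_pb {R : realType} (Q P g : 'M[R]_4) (u : idx -> R) i :
  Q *m P = 1%:M -> lower (Q^T *m g *m Q) (mv P u) i = pb1 Q (lower g u) i.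
Proof.
move=> QP; rewrite /lower /pb1.
transitivity (\sum_(k < 4) (\sum_(a < 4) Q a i * g a k) * \sum_(b < 4) Q k b * mv P u b).
  under eq_bigr => b _ do rewrite !mxE mulr_suml.
  rewrite exchange_big /=; apply: eq_bigr => k _.
  rewrite mulr_sumr; apply: eq_bigr => b _.
  rewrite mulrA mxE; congr (_ * _ * _).
  by apply: eq_bigr => a _; rewrite mxE.
under eq_bigr => k _ do rewrite QPv //.
under eq_bigr => k _ do rewrite mulr_suml.
rewrite exchange_big /=; apply: eq_bigr => a _.
rewrite mulr_sumr; apply: eq_bigr => k _; by rewrite mulrA.
Qed.

Lemma pb2_mx {R : realType} (Q g : 'M[R]_4) i j :
  (Q^T *m g *m Q) i j = pb2 Q (fun a b => g a b) i j.
Proof.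
rewrite /pb2 !mxE.
under eq_bigr => k _ do rewrite !mxE mulr_suml.
rewrite exchange_big /=; apply: eq_bigr => a _.
apply: eq_bigr => b _; rewrite !mxE; ring.
Qed.

Lemma split3 {R : realType} (x y z : R) (A B C w : idx -> R) :
  \sum_(m < 4) (x * A m + y * B m + z * C m) * w m
  = x * (\sum_(m < 4) A m * w m) + y * (\sum_(m < 4) B m * w m)
    + z * (\sum_(m < 4) C m * w m).
Proof.
rewrite !mulr_sumr -!big_split /=; apply: eq_bigr => m _; ring.
Qed.

Lemma contr_pb {R : realType} (Q P : 'M[R]_4) (X : tensor4 R) (u : idx -> R) a b c :
  Q *m P = 1%:M ->
  \sum_(m < 4) pb4 Q X a b c m * mv P u m
  = S3 (fun b' c' d' => Q b' a * Q c' b * Q d' c * \sum_(m < 4) X b' c' d' m * u m).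
Proof.
move=> QP; rewrite /pb4.
under eq_bigr => m _ do rewrite S4_mulr.
rewrite sum_S4 /S4 /S3; apply: eq_bigr => x _; apply: eq_bigr => y _;
  apply: eq_bigr => z _.
rewrite mulr_sumr; apply: eq_bigr => d _.
rewrite -(QPv Q P u d QP) !mulr_sumr; apply: eq_bigr => m _.
ring.
Qed.

Lemma compat_pb {R : realType} (Q P g : 'M[R]_4) (C : tensor4 R) (u : idx -> R) :
  Q *m P = 1%:M -> weyl_compatible g C u ->
  weyl_compatible (Q^T *m g *m Q) (pb4 Q C) (mv P u).
Proof.
move=> QP H i j k l.
rewrite split3 !lower_pb // !contr_pb // /pb1 !prod13.
rewrite [S4 (fun a b c d => Q a j * _ * _)]S4_p2314.
rewrite [S4 (fun a b c d => Q a k * _ * _)]S4_p3124 !S4_add -[RHS]S4_0.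
apply: S4_ext => a b c d /=.
have := H a b c d; rewrite split3 => H'.
transitivity (Q a i * Q b j * Q c k * Q d l *
   (lower g u a * \sum_(m < 4) C b c d m * u m +
    lower g u b * \sum_(m < 4) C c a d m * u m +
    lower g u c * \sum_(m < 4) C a b d m * u m)); first by ring.
by rewrite H' mulr0.
Qed.

Lemma electric_pb {R : realType} (Q P : 'M[R]_4) (C : tensor4 R) (u : idx -> R) j k :
  Q *m P = 1%:M ->
  electric (pb4 Q C) (mv P u) j k = pb2 Q (electric C u) j k.
Proof.
move=> QP; rewrite /electric /pb2.
transitivity (S4 (fun x y z w => Q x j * Q w k * u y * u z * C x y z w)).
  under eq_bigr => b _ do under eq_bigr => c _ do rewrite /pb4 S4_mull.
  rewrite sum2_S4; apply: S4_ext => x y z w.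
  transitivity (\sum_(b < 4) \sum_(c < 4) (Q y b * mv P u b) * ((Q z c * mv P u c) * (Q x j * Q w k * C x y z w))).
    by apply: eq_bigr => b _; apply: eq_bigr => c _; ring.
  under eq_bigr => b _ do rewrite -mulr_sumr.
  rewrite -mulr_suml -mulr_suml !QPv //; ring.
rewrite [LHS]S4_p1342 /S4; apply: eq_bigr => a _; apply: eq_bigr => d _.
rewrite mulr_sumr; apply: eq_bigr => b _.
rewrite mulr_sumr; apply: eq_bigr => c _.
ring.
Qed.

Lemma QHQt {R : realType} (Q H : 'M[R]_4) a c :
  (Q *m H *m Q^T) a c = \sum_(i < 4) \sum_(k < 4) Q a i * H i k * Q c k.
Proof.
rewrite mxE.
under eq_bigr => k _ do rewrite !mxE mulr_suml.
rewrite exchange_big /=; apply: eq_bigr => i _; apply: eq_bigr => k _.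
by rewrite ?mxE.
Qed.

Lemma trace_pb {R : realType} (Q H G : 'M[R]_4) (X : tensor4 R) :
  G = Q *m H *m Q^T ->
  (forall b d, \sum_(a < 4) \sum_(c < 4) G a c * X a b c d = 0) ->
  forall j l, \sum_(i < 4) \sum_(k < 4) H i k * pb4 Q X i j k l = 0.
Proof.
move=> HG HX j l.
under eq_bigr => i _ do under eq_bigr => k _ do rewrite /pb4 S4_mull.
rewrite sum2_S4.
transitivity (S4 (fun a b c d => Q b j * Q d l * (G a c * X a b c d))).
  apply: S4_ext => a b c d.
  rewrite HG QHQt mulr_suml mulr_sumr; apply: eq_bigr => i _.
  rewrite mulr_suml mulr_sumr; apply: eq_bigr => k _; ring.
rewrite S4_p3142 /S4 big1 // => b _; rewrite big1 // => d _.
under eq_bigr => c _ do rewrite -mulr_sumr.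
by rewrite -mulr_sumr HX mulr0.
Qed.

Definition rhsT {R : realType} (gm : idx -> idx -> R) (l : idx -> R) (E : idx -> idx -> R)
  (a b c d : idx) : R :=
  2 * (l a * l d * E b c - l a * l c * E b d + l b * l c * E a d - l b * l d * E a c)
  + gm a d * E b c - gm a c * E b d + gm b c * E a d - gm b d * E a c.

Lemma S4_sub {R : realType} (F G : idx -> idx -> idx -> idx -> R) :
  S4 F - S4 G = S4 (fun a b c d => F a b c d - G a b c d).
Proof. by rewrite !S4_tuple -sumrB. Qed.

Lemma PA {R : realType} (Q : 'M[R]_4) (M N : idx -> idx -> R) i j k l :
  pb4 Q (fun a b c d => M a d * N b c) i j k l = pb2 Q M i l * pb2 Q N j k.
Proof.
rewrite /pb2 prod22 [RHS]S4_p1423 /pb4; apply: S4_ext => a b c d; ring.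
Qed.

Lemma PB {R : realType} (Q : 'M[R]_4) (M N : idx -> idx -> R) i j k l :
  pb4 Q (fun a b c d => M a c * N b d) i j k l = pb2 Q M i k * pb2 Q N j l.
Proof.
rewrite /pb2 prod22 [RHS]S4_p1324 /pb4; apply: S4_ext => a b c d; ring.
Qed.

Lemma pb2_outer {R : realType} (Q : 'M[R]_4) (x : idx -> R) i l :
  pb2 Q (fun a d => x a * x d) i l = pb1 Q x i * pb1 Q x l.
Proof.
rewrite /pb2 /pb1 mulr_suml; apply: eq_bigr => a _.
rewrite mulr_sumr; apply: eq_bigr => d _; ring.
Qed.

Lemma pb4_rhs {R : realType} (Q : 'M[R]_4) gm (l : idx -> R) E i j k m :
  pb4 Q (rhsT gm l E) i j k m = rhsT (pb2 Q gm) (pb1 Q l) (pb2 Q E) i j k m.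
Proof.
transitivity (2 * (pb4 Q (fun a b c d => (fun a d => l a * l d) a d * E b c) i j k m
  - pb4 Q (fun a b c d => (fun a d => l a * l d) a c * E b d) i j k m
  + pb4 Q (fun a b c d => E a d * (fun a d => l a * l d) b c) i j k m
  - pb4 Q (fun a b c d => E a c * (fun a d => l a * l d) b d) i j k m)
  + pb4 Q (fun a b c d => gm a d * E b c) i j k m
  - pb4 Q (fun a b c d => gm a c * E b d) i j k m
  + pb4 Q (fun a b c d => E a d * gm b c) i j k m
  - pb4 Q (fun a b c d => E a c * gm b d) i j k m).
  rewrite /pb4 !(S4_add, S4_sub) S4_mull !(S4_add, S4_sub).
  apply: S4_ext => a b c d; rewrite /rhsT; ring.
rewrite !PA !PB !pb2_outer /rhsT; ring.
Qed.

Lemma pb4_ext {R : realType} (M : 'M[R]_4) (X Y : tensor4 R) :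
  (forall a b c d, X a b c d = Y a b c d) ->
  forall i j k l, pb4 M X i j k l = pb4 M Y i j k l.
Proof. by move=> H i j k l; apply: S4_ext => a b c d; rewrite H. Qed.

Lemma weyl_sq_dot {R : realType} (g : 'M[R]_4) (C : tensor4 R) :
  weyl_sq g C = S4 (fun a b c d => C a b c d * pb4 (ginv g)^T C a b c d).
Proof.
rewrite /weyl_sq /S4; apply: eq_bigr => a _; apply: eq_bigr => b _;
  apply: eq_bigr => c _; apply: eq_bigr => d _; congr (_ * _).
rewrite /pb4 /S4; apply: eq_bigr => p _; apply: eq_bigr => q _;
  apply: eq_bigr => r _; apply: eq_bigr => s _; by rewrite !mxE.
Qed.

Lemma dot4_adj {R : realType} (M : 'M[R]_4) (X Y : tensor4 R) :
  S4 (fun a b c d => pb4 M X a b c d * Y a b c d)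
  = S4 (fun p q r s => X p q r s * pb4 M^T Y p q r s).
Proof.
rewrite /pb4.
under S4_ext => a b c d do rewrite S4_mulr.
rewrite S4_exch; apply: S4_ext => p q r s.
rewrite S4_mull; apply: S4_ext => a b c d; rewrite !mxE; ring.
Qed.

Lemma weyl_sq_pb {R : realType} (g h P : 'M[R]_4) (C C' : tensor4 R) :
  (forall a b c d, C a b c d = pb4 P C' a b c d) ->
  P *m (ginv g)^T *m P^T = (ginv h)^T ->
  weyl_sq g C = weyl_sq h C'.
Proof.
move=> HC HG; rewrite !weyl_sq_dot.
transitivity (S4 (fun a b c d => pb4 P C' a b c d * pb4 (ginv g)^T (pb4 P C') a b c d)).
  apply: S4_ext => a b c d; rewrite HC; congr (_ * _).
  exact: pb4_ext.
rewrite dot4_adj; apply: S4_ext => p q r s; congr (_ * _).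
rewrite -HG -pb4_comp.
apply: pb4_ext => a b c d; exact: pb4_comp.
Qed.

Definition S2 {R : realType} (F : idx -> idx -> R) : R :=
  \sum_(a < 4) \sum_(b < 4) F a b.

Lemma S2_ext {R : realType} (F G : idx -> idx -> R) :
  (forall a b, F a b = G a b) -> S2 F = S2 G.
Proof. by move=> H; apply: eq_bigr => a _; apply: eq_bigr => b _; exact: H. Qed.

Lemma S2_tuple {R : realType} (F : idx -> idx -> R) :
  S2 F = \sum_(x : idx * idx) F x.1 x.2.
Proof. by rewrite /S2 pair_bigA. Qed.

Lemma S2_exch {R : realType} (F : idx -> idx -> idx -> idx -> R) :
  S2 (fun a b => S2 (fun i j => F a b i j)) = S2 (fun i j => S2 (fun a b => F a b i j)).
Proof.
rewrite S2_tuple; under eq_bigr => x _ do rewrite S2_tuple.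
rewrite exchange_big /= S2_tuple; apply: eq_bigr => y _.
by rewrite S2_tuple.
Qed.

Lemma S2_mull {R : realType} (x : R) F : x * S2 F = S2 (fun a b => x * F a b).
Proof. by rewrite /S2 mulr_sumr; apply: eq_bigr => a _; rewrite mulr_sumr. Qed.
Lemma S2_mulr {R : realType} (x : R) F : S2 F * x = S2 (fun a b => F a b * x).
Proof. by rewrite /S2 mulr_suml; apply: eq_bigr => a _; rewrite mulr_suml. Qed.

Lemma pb2_comp {R : realType} (M N : 'M[R]_4) X i j :
  pb2 M (pb2 N X) i j = pb2 (N *m M) X i j.
Proof.
rewrite /pb2.
transitivity (S2 (fun a b => S2 (fun p q => N p a * M a i * (N q b * M b j) * X p q))).
  apply: S2_ext => a b; rewrite S2_mull; apply: S2_ext => p q; ring.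
rewrite S2_exch; apply: S2_ext => p q.
rewrite -S2_mulr; congr (_ * _).
rewrite !mxE /S2 mulr_suml; apply: eq_bigr => a _.
by rewrite mulr_sumr.
Qed.

Lemma pb2_ext {R : realType} (M : 'M[R]_4) (X Y : idx -> idx -> R) :
  (forall a b, X a b = Y a b) -> forall i j, pb2 M X i j = pb2 M Y i j.
Proof. by move=> H i j; apply: S2_ext => a b; rewrite H. Qed.

Lemma t2_dot {R : realType} (g : 'M[R]_4) (E : idx -> idx -> R) :
  tensor2_sq g E = S2 (fun a b => E a b * pb2 (ginv g)^T E a b).
Proof.
rewrite /tensor2_sq /S2; apply: eq_bigr => a _; apply: eq_bigr => b _; congr (_ * _).
rewrite /pb2; apply: eq_bigr => p _; apply: eq_bigr => q _; by rewrite !mxE.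
Qed.

Lemma dot2_adj {R : realType} (M : 'M[R]_4) (X Y : idx -> idx -> R) :
  S2 (fun a b => pb2 M X a b * Y a b) = S2 (fun p q => X p q * pb2 M^T Y p q).
Proof.
rewrite /pb2.
transitivity (S2 (fun a b => S2 (fun p q => M p a * M q b * X p q * Y a b))).
  by apply: S2_ext => a b; rewrite -/(S2 _) S2_mulr.
rewrite S2_exch; apply: S2_ext => p q.
rewrite -/(S2 _) S2_mull; apply: S2_ext => a b; rewrite !mxE; ring.
Qed.

Lemma t2_pb {R : realType} (g h P : 'M[R]_4) (E E' : idx -> idx -> R) :
  (forall a b, E a b = pb2 P E' a b) ->
  P *m (ginv g)^T *m P^T = (ginv h)^T ->
  tensor2_sq g E = tensor2_sq h E'.
Proof.
move=> HE HG; rewrite !t2_dot.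
transitivity (S2 (fun a b => pb2 P E' a b * pb2 (ginv g)^T (pb2 P E') a b)).
  apply: S2_ext => a b; rewrite HE; congr (_ * _).
  exact: pb2_ext.
rewrite dot2_adj; apply: S2_ext => p q; congr (_ * _).
rewrite -HG -pb2_comp.
apply: pb2_ext => a b; exact: pb2_comp.
Qed.


Lemma mink_eta {R : realType} a b : minkowski R a b = eta a b.
Proof.
rewrite /minkowski /eta !mxE.
case: (ord4P a) => ->; case: (ord4P b) => ->; rewrite /= ?mxE //=.
Qed.

Lemma mink_fun {R : realType} : fun_of_matrix (minkowski R) = (fun a b => eta a b).
Proof. by apply: functional_extensionality => a; apply: functional_extensionality => b; rewrite mink_eta. Qed.

Lemma mink_sq {R : realType} : minkowski R *m minkowski R = 1%:M.
Proof.
apply/matrixP => a b; rewrite !mxE sum4 !mink_eta.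
case: (ord4P a) => ->; case: (ord4P b) => ->; rewrite /eta /=; lra.
Qed.

Lemma mink_tr {R : realType} : (minkowski R)^T = minkowski R.
Proof.
apply/matrixP => a b; rewrite [LHS]mxE !mink_eta.
by case: (ord4P a) => ->; case: (ord4P b) => ->.
Qed.

Lemma inv_of {R : realType} (A B : 'M[R]_4) : A *m B = 1%:M -> invmx B = A.
Proof.
move=> AB; have [uA uB] := mulmx1_unit AB.
by rewrite -[invmx B]mul1mx -AB -mulmxA mulmxV // mulmx1.
Qed.

Lemma ginv_mink {R : realType} : ginv (minkowski R) = minkowski R.
Proof. by rewrite /ginv; apply: inv_of; exact: mink_sq. Qed.

Definition Lb {R : realType} (w : idx -> R) : 'M[R]_4 :=
  \matrix_(i, j) (if i == i0 then (if j == i0 then w i0 else w j)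
                  else if j == i0 then w i else (i == j)%:R + w i * w j / (1 + w i0)).

Lemma boost_key {R : realType} (w : idx -> R) a b :
  1 + w i0 != 0 ->
  pb2 (Lb w) (fun a b => minkowski R a b) a b
  = eta a b + (w i1 ^+ 2 + w i2 ^+ 2 + w i3 ^+ 2 - (w i0 ^+ 2 - 1)) *
     ((if a == i0 then 1 else w a / (1 + w i0)) * (if b == i0 then 1 else w b / (1 + w i0))).
Proof.
move=> h1; rewrite /pb2 !sum4 !mink_eta /Lb !mxE.
by case: (ord4P a) => ->; case: (ord4P b) => ->; rewrite /eta /=; field.
Qed.

Lemma boost_ok {R : realType} (w : idx -> R) :
  0 < w i0 -> - w i0 ^+ 2 + w i1 ^+ 2 + w i2 ^+ 2 + w i3 ^+ 2 = -1 ->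
  (Lb w)^T *m minkowski R *m Lb w = minkowski R.
Proof.
move=> hp hn.
have h1 : 1 + w i0 != 0 by rewrite gt_eqF //; lra.
have hz : w i1 ^+ 2 + w i2 ^+ 2 + w i3 ^+ 2 - (w i0 ^+ 2 - 1) = 0 by lra.
apply/matrixP => a b.
by rewrite pb2_mx boost_key // hz mul0r addr0 mink_eta.
Qed.

Lemma norm_pb {R : realType} (Q P : 'M[R]_4) (l u : idx -> R) :
  Q *m P = 1%:M ->
  \sum_(k < 4) pb1 Q l k * mv P u k = \sum_(a < 4) l a * u a.
Proof.
move=> QP; rewrite /pb1.
under eq_bigr => k _ do rewrite mulr_suml.
rewrite exchange_big /=; apply: eq_bigr => a _.
rewrite -(QPv Q P u a QP) mulr_sumr; apply: eq_bigr => k _; ring.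
Qed.

Lemma lower_mink {R : realType} (v : idx -> R) k :
  lower (minkowski R) v k = eta k k * v k.
Proof.
rewrite /lower (@sum_diag _ k) ?mink_eta // => r Hr.
by rewrite mink_eta (eta_off Hr) mul0r.
Qed.

Lemma lb_unit {R : realType} (w : idx -> R) :
  (Lb w)^T *m minkowski R *m Lb w = minkowski R -> Lb w \in unitmx.
Proof.
move=> H.
have : (minkowski R *m (Lb w)^T *m minkowski R) *m Lb w = 1%:M.
  by rewrite -!mulmxA (mulmxA (Lb w)^T) H mink_sq.
by case/mulmx1_unit.
Qed.

Lemma frame_exists {R : realType} (g : 'M[R]_4) (u : idx -> R) :
  lorentzian g -> \sum_(k < 4) lower g u k * u k = -1 ->
  exists (Q : 'M[R]_4) (s : R), [/\ Q \in unitmx, Q^T *m g *m Q = minkowski R,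
     s * s = 1 & forall m, mv (invmx Q) u m = s * d0 m].
Proof.
case=> _ [P0 [uP0 HP0]] hn.
have QP0 : P0 *m invmx P0 = 1%:M by rewrite mulmxV.
set u' := mv (invmx P0) u.
have hn' : - u' i0 ^+ 2 + u' i1 ^+ 2 + u' i2 ^+ 2 + u' i3 ^+ 2 = -1.
  rewrite -hn -(norm_pb P0 (invmx P0) (lower g u) u QP0).
  under eq_bigr => k _ do rewrite -(lower_pb P0 (invmx P0) g u k QP0) HP0 lower_mink.
  rewrite sum4 /eta /= /u'; ring.
pose s : R := if 0 < u' i0 then 1 else -1.
have hs : s * s = 1 by rewrite /s; case: ifP => _; ring.
pose w := fun m => s * u' m.
have hw0 : 0 < w i0.
  rewrite /w /s; case: ifP => h; first by rewrite mul1r.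
  move/negbT: h; rewrite -leNgt => h.
  have h2 : 1 <= u' i0 ^+ 2.
    have := sqr_ge0 (u' i1); have := sqr_ge0 (u' i2); have := sqr_ge0 (u' i3); lra.
  nra.
have hwn : - w i0 ^+ 2 + w i1 ^+ 2 + w i2 ^+ 2 + w i3 ^+ 2 = -1.
  rewrite /w !exprMn; rewrite expr2 hs !mul1r //.
have HL := boost_ok w hw0 hwn.
exists (P0 *m Lb w), s; split.
- by rewrite unitmx_mul uP0 lb_unit.
- by rewrite trmx_mul -!mulmxA (mulmxA P0^T) (mulmxA (P0^T *m g)) HP0 mulmxA.
- exact: hs.
move=> m.
have HQ0 : forall a, (P0 *m Lb w) a i0 = s * u a.
  move=> a; rewrite mxE -(QPv P0 (invmx P0) u a QP0) mulr_sumr.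
  apply: eq_bigr => k _; rewrite /Lb mxE eqxx.
  have -> : (if k == i0 then w i0 else w k) = w k by case: ifP => [/eqP -> |].
  rewrite /w -/u'; ring.
have uQ : (P0 *m Lb w) \in unitmx by rewrite unitmx_mul uP0 lb_unit.
transitivity (s * (invmx (P0 *m Lb w) *m (P0 *m Lb w)) m i0).
  rewrite mxE /mv mulr_sumr; apply: eq_bigr => a _.
  rewrite HQ0; transitivity ((s * s) * (invmx (P0 *m Lb w) m a * u a)); [by rewrite hs mul1r | ring].
rewrite (mulVmx uQ) mxE /d0; by case: ifP.
Qed.

Lemma ginv_frame {R : realType} (g Q : 'M[R]_4) :
  Q \in unitmx -> Q^T *m g *m Q = minkowski R ->
  ginv g = Q *m minkowski R *m Q^T.
Proof.
move=> uQ H.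
have PQ : invmx Q *m Q = 1%:M by rewrite mulVmx.
have QP : Q *m invmx Q = 1%:M by rewrite mulmxV.
have Hg : g = (invmx Q)^T *m minkowski R *m invmx Q.
  rewrite -H !mulmxA -trmx_mul QP trmx1 mul1mx -mulmxA QP mulmx1 //.
rewrite /ginv; apply: inv_of.
rewrite Hg !mulmxA -(mulmxA (Q *m minkowski R) Q^T) -trmx_mul PQ trmx1 mulmx1.
by rewrite -(mulmxA Q) mink_sq mulmx1 QP.
Qed.

Lemma trace_eta {R : realType} (X : tensor4 R) b d :
  \sum_(i < 4) \sum_(k < 4) eta i k * X i b k d
  = - X i0 b i0 d + X i1 b i1 d + X i2 b i2 d + X i3 b i3 d.
Proof.
transitivity (\sum_(i < 4) eta i i * X i b i d).
  apply: eq_bigr => i _; apply: sum_diag => r hr; by rewrite (eta_off hr) mul0r.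
rewrite sum4 /eta /=; ring.
Qed.

Lemma rhs_Wt {R : realType} (s : R) (e : idx -> idx -> R) a b c d :
  s * s = 1 ->
  rhsT (fun x y => eta x y) (fun x => - s * d0 x) e a b c d = Wt e a b c d.
Proof.
move=> hs; rewrite /rhsT /Wt /=.
have ll : forall x y : idx, (- s * d0 x) * (- s * d0 y) = (d0 x * d0 y : R).
  by move=> x y; transitivity ((s * s) * (d0 x * d0 y)); [ring | rewrite hs mul1r].
by rewrite !ll.
Qed.

Lemma sum_d0 {R : realType} (s : R) (F : idx -> R) :
  \sum_(m < 4) F m * (s * d0 m) = F i0 * s.
Proof.
rewrite (@sum_diag _ i0) /d0 ?eqxx ?mulr1 // => r hr.
by rewrite (negbTE hr) mulr0 mulr0.
Qed.

Lemma weyl_sq_mink {R : realType} (X : tensor4 R) :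
  weyl_sq (minkowski R) X
  = S4 (fun a b c d => X a b c d * (eta a a * eta b b * eta c c * eta d d * X a b c d)).
Proof.
rewrite /weyl_sq ginv_mink mink_fun /S4.
apply: eq_bigr => a _; apply: eq_bigr => b _; apply: eq_bigr => c _;
  apply: eq_bigr => d _; by rewrite inner_eta.
Qed.

Lemma t2_mink {R : realType} (E : idx -> idx -> R) :
  tensor2_sq (minkowski R) E
  = \sum_(a < 4) \sum_(b < 4) E a b * (eta a a * eta b b * E a b).
Proof.
rewrite /tensor2_sq ginv_mink mink_fun.
apply: eq_bigr => a _; apply: eq_bigr => b _; congr (_ * _).
transitivity (\sum_(p < 4) eta a p * eta b b * E p b).
  apply: eq_bigr => p _; apply: sum_diag => r hr; by rewrite (eta_off hr) mulr0 mul0r.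
apply: sum_diag => r hr; by rewrite (eta_off hr) !mul0r.
Qed.

Theorem proposition3p1 (R : realType) (g : 'M[R]_4) (C : tensor4 R)
  (u : 'I_4 -> R) :
  lorentzian g ->
  weyl_tensor g C ->
  \sum_(k < 4) lower g u k * u k = -1 ->
  weyl_compatible g C u ->
  (forall a b c d,
     C a b c d =
       2 * (lower g u a * lower g u d * electric C u b c
            - lower g u a * lower g u c * electric C u b d
            + lower g u b * lower g u c * electric C u a d
            - lower g u b * lower g u d * electric C u a c)
       + g a d * electric C u b c - g a c * electric C u b d
       + g b c * electric C u a d - g b d * electric C u a c)
  /\ weyl_sq g C = 8 * tensor2_sq g (electric C u).
Proof.
move=> Hl [A1 [A2 [A3 [B Htr]]]] hn Hc.
have [Q [s [uQ HQ hs Hu]]] := frame_exists g u Hl hn.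
have QP : Q *m invmx Q = 1%:M by rewrite mulmxV.
have PQ : invmx Q *m Q = 1%:M by rewrite mulVmx.
have Huh : mv (invmx Q) u = fun m => s * d0 m.
  by apply: functional_extensionality => m; rewrite Hu.
have HG := ginv_frame g Q uQ HQ.
pose Ch := pb4 Q C.
have fA1 := pb4_A1 Q C A1.
have fA2 := pb4_A2 Q C A2.
have fA3 := pb4_A3 Q C A3.
have fB := pb4_B Q C B.
have fTr : forall b d, - Ch i0 b i0 d + Ch i1 b i1 d + Ch i2 b i2 d + Ch i3 b i3 d = 0.
  move=> b d; rewrite -trace_eta.
  rewrite -[RHS](trace_pb Q (minkowski R) (ginv g) C HG Htr b d).
  apply: eq_bigr => i _; apply: eq_bigr => k _; by rewrite mink_eta.
have Hc' := compat_pb Q (invmx Q) g C u QP Hc.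
rewrite HQ Huh in Hc'.
have fM : forall j k l, j != i0 -> k != i0 -> Ch j k l i0 = 0.
  move=> j k l hj hk.
  have := Hc' i0 j k l; rewrite sum_d0 !lower_mink /d0 eqxx (negbTE hj) (negbTE hk) /eta /=.
  rewrite !mulr0 !mul0r !addr0 !mulr1 => H.
  have H2 : s * s * Ch j k l i0 = 0.
    transitivity (- (-1 * s * pb4 Q C j k l i0 * s)); first by rewrite /Ch; ring.
    by rewrite H oppr0.
  by move: H2; rewrite hs mul1r.
have G1f := frame_G1 R Ch fA1 fA2 fA3 fB fTr fM.
pose e := fun x y => Ch x i0 i0 y.
have HE : forall j k, pb2 Q (electric C u) j k = e j k.
  move=> j k; rewrite -(electric_pb Q (invmx Q) C u j k QP) Huh /electric.
  rewrite (@sum_diag _ i0); last first.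
    by move=> r hr; apply: big1 => c _; rewrite /d0 (negbTE hr) mulr0 !mul0r.
  rewrite (@sum_diag _ i0); last first.
    by move=> r hr; rewrite /d0 (negbTE hr) mulr0 mulr0 mul0r.
  rewrite /d0 eqxx mulr1 hs mul1r //.
have HEf : pb2 Q (electric C u) = e.
  by apply: functional_extensionality => j; apply: functional_extensionality => k; rewrite HE.
have Hlf : pb1 Q (lower g u) = (fun a => - s * d0 a).
  apply: functional_extensionality => a.
  rewrite -(lower_pb Q (invmx Q) g u a QP) HQ lower_mink Huh /eta eqxx /d0; case: ifP => _; ring.
have Hgf : pb2 Q (fun a b => g a b) = (fun a b => eta a b).
  by apply: functional_extensionality => i; apply: functional_extensionality => j;
     rewrite -pb2_mx HQ mink_eta.
have G1 : forall a b c d, C a b c d = rhsT (fun a b => g a b) (lower g u) (electric C u) a b c d.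
  move=> a b c d.
  rewrite -[LHS](pb4_1 C) -[RHS](pb4_1 (rhsT _ _ _)) -QP -!pb4_comp.
  apply: pb4_ext => i j k l.
  by rewrite pb4_rhs -/Ch G1f Hgf Hlf HEf rhs_Wt.
have HCP : forall a b c d, C a b c d = pb4 (invmx Q) Ch a b c d.
  by move=> a b c d; rewrite /Ch pb4_comp QP pb4_1.
have HEP : forall a b, electric C u a b = pb2 (invmx Q) e a b.
  move=> a b; rewrite -HEf pb2_comp QP.
  rewrite /pb2 (@sum_one _ a); last first.
    by move=> r hr; apply: big1 => q _; rewrite mxE (negbTE hr) !mul0r.
  rewrite (@sum_one _ b); last first.
    by move=> r hr; rewrite [1%:M r b]mxE (negbTE hr) mulr0 mul0r.
  by rewrite !mxE !eqxx !mul1r.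
have HGt : invmx Q *m (ginv g)^T *m (invmx Q)^T = (ginv (minkowski R))^T.
  rewrite HG ginv_mink !trmx_mul trmxK mink_tr !mulmxA PQ mul1mx.
  by rewrite -mulmxA -trmx_mul PQ trmx1 mulmx1.
split.
  by move=> a b c d; rewrite G1 /rhsT.
rewrite (weyl_sq_pb g (minkowski R) (invmx Q) C Ch HCP HGt) (t2_pb g (minkowski R) (invmx Q) (electric C u) e HEP HGt) weyl_sq_mink t2_mink.
have he0 : forall x, e i0 x = 0 by move=> x; rewrite /e; have := fA1 i0 i0 i0 x; rewrite /Ch; lra.
have he0' : forall x, e x i0 = 0 by move=> x; rewrite /e; have := fA2 x i0 i0 i0; rewrite /Ch; lra.
have esym : forall x y, e x y = e y x.
  move=> x y; rewrite /e; have := fA3 x i0 i0 y; have := fA1 i0 y x i0;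
  have := fA2 y i0 x i0; rewrite /Ch; lra.
have ht : e i3 i3 = - e i1 i1 - e i2 i2.
  rewrite /e; have := fTr i0 i0; have := fA1 i0 i0 i0 i0; have := fA2 i1 i0 i0 i1;
  have := fA2 i2 i0 i0 i2; have := fA2 i3 i0 i0 i3; rewrite /Ch; lra.
rewrite -(quad e he0 he0' (esym i2 i1) (esym i3 i1) (esym i3 i2) ht).
apply: S4_ext => a b c d; by rewrite G1f.
Qed.
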